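(* Let $\mathcal K$ be a tame topological Kuranishi atlas and write $\mathrm{Obj}:=\bigsqcup_{I\in\mathcal I_{\mathcal K}}U_I$. For $\mathcal A\subset\mathrm{Obj}$ denote by $\|\mathcal A\|$ the set $\pi_{\mathcal K}(\mathcal A)$ with the subspace topology from $|\mathcal K|$, and by $|\mathcal A|$ the same set with the quotient topology induced by $\pi_{\mathcal K}|_{\mathcal A}:\mathcal A\to\pi_{\mathcal K}(\mathcal A)$ (i.e. $\mathcal A$ modulo the restriction of the equivalence relation $\sim$ on $\mathrm{Obj}$). Then: (i) for every $\mathcal A\subset\mathrm{Obj}$ the identity $|\mathcal A|\to\|\mathcal A\|$ is continuous; (ii) if $\mathcal A\sqsubset\mathrm{Obj}$ (i.e. its closure $\overline{\mathcal A}$ in $\mathrm{Obj}$ is compact), then $|\overline{\mathcal A}|$ and $\|\overline{\mathcal A}\|$ are compact and their topologies coincide; (iii) if $\mathcal A\sqsubset\mathcal A'\subset\mathrm{Obj}$, then $\pi_{\mathcal K}(\overline{\mathcal A})=\overline{\pi_{\mathcal K}(\mathcal A)}$ (closure in $|\mathcal K|$) and $\pi_{\mathcal K}(\mathcal A)\sqsubset\pi_{\mathcal K}(\mathcal A')$ in $|\mathcal K|$; (iv) if $\mathcal A\sqsubset\mathrm{Obj}$, then $\|\overline{\mathcal A}\|=|\overline{\mathcal A}|$ is metrizable; in particular $\|\mathcal A\|$ is metrizable.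
   Context: Notation: for subsets $V'\subset V$ of a topological space, $V'\sqsubset V$ means the closure of $V'$ in $V$ is compact. $X$ is a compact metrizable space. Charts: a topological Kuranishi chart for $X$ with open footprint $F\subset X$ is a tuple $\mathbf K=(U,\mathbb E,\mathfrak s,\psi)$ where $U$ is a separable, locally compact, metrizable space; $\mathbb E$ is a separable, locally compact, metrizable space with continuous maps $\mathrm{pr}:\mathbb E\to U$ and $0:U\to\mathbb E$ with $\mathrm{pr}\circ0=\mathrm{id}_U$; $\mathfrak s:U\to\mathbb E$ is continuous with $\mathrm{pr}\circ\mathfrak s=\mathrm{id}_U$; and $\psi$ is a homeomorphism from $\mathfrak s^{-1}(0):=\{x\in U:\mathfrak s(x)=0(x)\}$ onto $F$. Coordinate changes: for charts $\mathbf K_I,\mathbf K_J$ with $F_I\cap F_J\neq\emptyset$, a coordinate change $\widehat\Phi_{IJ}:\mathbf K_I\to\mathbf K_J$ consists of an open set $U_{IJ}\subset U_I$ with $U_{IJ}\cap\mathfrak s_I^{-1}(0_I)=\psi_I^{-1}(F_I\cap F_J)$ and a topological embedding $\widehat\Phi_{IJ}:\mathrm{pr}_I^{-1}(U_{IJ})\to\mathbb E_J$ such that there is a topological embedding $\phi_{IJ}:U_{IJ}\to U_J$ with $\mathrm{pr}_J\circ\widehat\Phi_{IJ}=\phi_{IJ}\circ\mathrm{pr}_I$, $0_J\circ\phi_{IJ}=\widehat\Phi_{IJ}\circ0_I$ and $\mathfrak s_J\circ\phi_{IJ}=\widehat\Phi_{IJ}\circ\mathfrak s_I$ on $U_{IJ}$,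 and $\phi_{IJ}=\psi_J^{-1}\circ\psi_I$ on $U_{IJ}\cap\mathfrak s_I^{-1}(0_I)$. Atlases: a covering family of basic charts is a finite family $(\mathbf K_i)_{i=1,\dots,N}$ of charts whose footprints cover $X$; $\mathcal I_{\mathcal K}$ is the set of nonempty $I\subset\{1,\dots,N\}$ with $F_I:=\bigcap_{i\in I}F_i\neq\emptyset$. Transition data consist of a chart $\mathbf K_J$ with footprint $F_J$ for each $J\in\mathcal I_{\mathcal K}$ with $|J|\ge2$ (and $\mathbf K_{\{i\}}:=\mathbf K_i$), and a coordinate change $\widehat\Phi_{IJ}:\mathbf K_I\to\mathbf K_J$ for all $I\subsetneq J$ in $\mathcal I_{\mathcal K}$. We set $U_{II}:=U_I$, $\phi_{II}:=\mathrm{id}_{U_I}$. For $I\subsetneq J\subsetneq K$ let $U_{IJK}:=U_{IJ}\cap\phi_{IJ}^{-1}(U_{JK})$. The triple satisfies the weak cocycle condition if $\widehat\Phi_{JK}\circ\widehat\Phi_{IJ}=\widehat\Phi_{IK}$ on $\mathrm{pr}_I^{-1}(U_{IJK}\cap U_{IK})$; the cocycle condition if in addition $U_{IJK}\subset U_{IK}$; the strong cocycle condition if in addition $U_{IJK}=U_{IK}$. A weak topological Kuranishi atlas $\mathcal K$ is a covering family with transition data satisfying the weak cocycle condition for all such triples; a topological Kuranishi atlas is one satisfying the cocycle condition for all triples. Filtrations: a weak topological Kuranishi atlas is filtered if it is equipped with closed subsets $\mathbb E_{IJ}\subset\mathbb E_J$ for all $J\in\mathcal I_{\mathcal K}$ and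 $I\subset J$ (including $I=\emptyset$) such that (i) $\mathbb E_{JJ}=\mathbb E_J$ and $\mathbb E_{\emptyset J}=\mathrm{im}\,0_J$; (ii) $\widehat\Phi_{JK}(\mathrm{pr}_J^{-1}(U_{JK})\cap\mathbb E_{IJ})=\mathbb E_{IK}\cap\mathrm{pr}_K^{-1}(\mathrm{im}\,\phi_{JK})$ for $I\subset J\subsetneq K$; (iii) $\mathbb E_{IJ}\cap\mathbb E_{HJ}=\mathbb E_{(I\cap H)J}$ for $I,H\subset J$; (iv) $\mathrm{im}\,\phi_{IJ}$ is an open subset of $\mathfrak s_J^{-1}(\mathbb E_{IJ})$ for $I\subsetneq J$. Tameness: a filtered weak topological Kuranishi atlas is tame if $U_{IJ}\cap U_{IK}=U_{I(J\cup K)}$ for all $I,J,K\in\mathcal I_{\mathcal K}$ with $I\subset J,K$ (where $U_{IL}:=\emptyset$ if $L\notin\mathcal I_{\mathcal K}$), and $\phi_{IJ}(U_{IK})=U_{JK}\cap\mathfrak s_J^{-1}(\mathbb E_{IJ})$ for all $I\subset J\subset K$ in $\mathcal I_{\mathcal K}$ (equalities of indices allowed). Virtual neighbourhood: for a topological Kuranishi atlas, $|\mathcal K|$ is the quotient of $\bigsqcup_{I\in\mathcal I_{\mathcal K}}U_I=\{(I,x):x\in U_I\}$ by the equivalence relation generated by $(I,x)\sim(J,\phi_{IJ}(x))$ for $I\subset J$, $x\in U_{IJ}$, with the quotient topology and projection $\pi_{\mathcal K}$. *)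

(* Defs.v *)
From mathcomp Require Import all_boot.
From Stdlib Require Import Reals Relations.

Unset Printing Implicit Defensive.

Definition topology (T : Type) := (T -> Prop) -> Prop.

Definition is_topology {T : Type} (op : topology T) : Prop :=
  op (fun _ => True) /\
  (forall A B, op A -> op B -> op (fun x => A x /\ B x)) /\
  (forall F : (T -> Prop) -> Prop, (forall A, F A -> op A) ->
      op (fun x => exists A, F A /\ A x)).

Definition tclosed {T : Type} (op : topology T) (C : T -> Prop) : Prop :=
  op (fun x => ~ C x).

Definition tclosure {T : Type} (op : topology T) (A : T -> Prop) : T -> Prop :=
  fun x => forall C, tclosed op C -> (forall y, A y -> C y) -> C x.

Definition subspace {T : Type} (op : topology T) (S : T -> Prop)
  : topology {x : T | S x} :=
  fun V => exists W, op W /\ forall y : {x : T | S x}, V y <-> W (proj1_sig y).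

Definition compact_space {T : Type} (op : topology T) : Prop :=
  forall F : (T -> Prop) -> Prop,
    (forall A, F A -> op A) -> (forall x, exists A, F A /\ A x) ->
    exists (n : nat) (f : nat -> (T -> Prop)),
      (forall k, (k < n)%N -> F (f k)) /\
      (forall x, exists k, (k < n)%N /\ f k x).

(* V' ⊏ V (for V' ⊂ V ⊂ T, V with the subspace topology):
   the tclosure of V' in V is compact *)
Definition relcomp_in {T : Type} (op : topology T) (V' V : T -> Prop) : Prop :=
  compact_space
    (subspace (subspace op V)
       (tclosure (subspace op V) (fun y : {x : T | V x} => V' (proj1_sig y)))).

Definition relcomp {T : Type} (op : topology T) (A : T -> Prop) : Prop :=
  compact_space (subspace op (tclosure op A)).

Definition continuous {A B : Type} (opA : topology A) (opB : topology B)
  (f : A -> B) : Prop :=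
  forall W, opB W -> opA (fun x => W (f x)).

Definition embedding {A B : Type} (opA : topology A) (opB : topology B)
  (f : A -> B) : Prop :=
  (forall x y, f x = f y -> x = y) /\ continuous opA opB f /\
  (forall V, opA V -> exists W, opB W /\ forall x, V x <-> W (f x)).

Definition is_metric {T : Type} (d : T -> T -> R) : Prop :=
  (forall x y, (0 <= d x y)%R) /\
  (forall x y, d x y = 0%R <-> x = y) /\
  (forall x y, d x y = d y x) /\
  (forall x y z, (d x z <= d x y + d y z)%R).

Definition metrizable {T : Type} (op : topology T) : Prop :=
  exists d : T -> T -> R, is_metric d /\
    forall V, op V <-> (forall x, V x -> exists eps, (0 < eps)%R /\
                          forall y, (d x y < eps)%R -> V y).

Definition countable_set {T : Type} (D : T -> Prop) : Prop :=
  exists g : T -> nat, forall x y, D x -> D y -> g x = g y -> x = y.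

Definition separable {T : Type} (op : topology T) : Prop :=
  exists D : T -> Prop, countable_set D /\ forall x, tclosure op D x.

Definition locally_compact {T : Type} (op : topology T) : Prop :=
  forall x, exists V Kc : T -> Prop, op V /\ V x /\ (forall y, V y -> Kc y) /\
    compact_space (subspace op Kc).

Definition qtype {T : Type} (Rl : T -> T -> Prop) : Type :=
  {P : T -> Prop | exists a, forall b, P b <-> Rl a b}.

Definition qproj {T : Type} (Rl : T -> T -> Prop) (a : T) : qtype Rl :=
  exist _ (Rl a) (ex_intro _ a (fun b => iff_refl (Rl a b))).

Definition quotient_top {T : Type} (op : topology T) (Rl : T -> T -> Prop)
  : topology (qtype Rl) :=
  fun W => op (fun a => W (qproj Rl a)).

Record chart (X : Type) := Chart {
  cU : Type;
  topU : topology cU;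
  cE : Type;
  topE : topology cE;
  pr : cE -> cU;
  zero : cU -> cE;
  sec : cU -> cE;
  foot : X -> Prop;
  psi : {x : cU | sec x = zero x} -> X
}.

Arguments cU {X}. Arguments topU {X}. Arguments cE {X}. Arguments topE {X}.
Arguments pr {X}. Arguments zero {X}. Arguments sec {X}. Arguments foot {X}.
Arguments psi {X}.

Definition zero_set {X : Type} (K : chart X) : cU K -> Prop :=
  fun x => sec K x = zero K x.

Definition is_chart {X : Type} (opX : topology X) (K : chart X) : Prop :=
  is_topology (topU K) /\ is_topology (topE K) /\
  separable (topU K) /\ locally_compact (topU K) /\ metrizable (topU K) /\
  separable (topE K) /\ locally_compact (topE K) /\ metrizable (topE K) /\
  continuous (topE K) (topU K) (pr K) /\
  continuous (topU K) (topE K) (zero K) /\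
  continuous (topU K) (topE K) (sec K) /\
  (forall x, pr K (zero K x) = x) /\
  (forall x, pr K (sec K x) = x) /\
  opX (foot K) /\
  embedding (subspace (topU K) (zero_set K)) opX (psi K) /\
  (forall y, foot K y <-> exists z, psi K z = y).

(* coordinate change K_I -> K_J given by U_IJ, Phi_IJ, phi_IJ.
   Phi and phi are total functions; only their restrictions to
   pr^{-1}(U_IJ), resp. U_IJ, matter. *)
Definition coord_change {X : Type} {KI KJ : chart X} (U : cU KI -> Prop)
  (Phi : cE KI -> cE KJ) (phi : cU KI -> cU KJ) : Prop :=
  topU KI U /\
  (forall x (h : sec KI x = zero KI x),
     U x <-> (foot KI (psi KI (exist _ x h)) /\ foot KJ (psi KI (exist _ x h)))) /\
  embedding (subspace (topE KI) (fun e => U (pr KI e))) (topE KJ)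
            (fun e => Phi (proj1_sig e)) /\
  embedding (subspace (topU KI) U) (topU KJ) (fun x => phi (proj1_sig x)) /\
  (forall e, U (pr KI e) -> pr KJ (Phi e) = phi (pr KI e)) /\
  (forall x, U x -> zero KJ (phi x) = Phi (zero KI x)) /\
  (forall x, U x -> sec KJ (phi x) = Phi (sec KI x)) /\
  (forall x (h : sec KI x = zero KI x), U x ->
     exists h' : sec KJ (phi x) = zero KJ (phi x),
       psi KJ (exist _ (phi x) h') = psi KI (exist _ x h)).

Record atlas (X : Type) := Atlas {
  aN : nat;
  aK : {set 'I_aN} -> chart X;
  aUIJ : forall I J : {set 'I_aN}, cU (aK I) -> Prop;
  aphi : forall I J : {set 'I_aN}, cU (aK I) -> cU (aK J);
  aPhi : forall I J : {set 'I_aN}, cE (aK I) -> cE (aK J);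
  (* filtration E_IJ ⊂ E_J *)
  aE : forall I J : {set 'I_aN}, cE (aK J) -> Prop
}.

Arguments aN {X}. Arguments aK {X}. Arguments aUIJ {X}. Arguments aphi {X}.
Arguments aPhi {X}. Arguments aE {X}.

Definition inIK {X : Type} (K : atlas X) (I : {set 'I_(aN K)}) : Prop :=
  I != set0 /\ exists x, forall i, i \in I -> foot (aK K [set i]) x.

Definition is_top_atlas {X : Type} (opX : topology X) (K : atlas X) : Prop :=
  (forall x, exists i, foot (aK K [set i]) x) /\
  (forall I : {set 'I_(aN K)}, inIK K I -> is_chart opX (aK K I)) /\
  (forall J : {set 'I_(aN K)}, inIK K J -> forall x,
      foot (aK K J) x <-> (forall i, i \in J -> foot (aK K [set i]) x)) /\
  (forall I J : {set 'I_(aN K)}, inIK K I -> inIK K J -> I \proper J ->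
      coord_change (aUIJ K I J) (aPhi K I J) (aphi K I J)) /\
  (forall I : {set 'I_(aN K)}, inIK K I -> forall x, aUIJ K I I x /\ aphi K I I x = x) /\
  (forall I J L : {set 'I_(aN K)}, inIK K I -> inIK K J -> inIK K L ->
      I \proper J -> J \proper L ->
      (forall e, (aUIJ K I J (pr _ e) /\ aUIJ K J L (aphi K I J (pr _ e))) /\
                 aUIJ K I L (pr _ e) ->
                 aPhi K J L (aPhi K I J e) = aPhi K I L e) /\
      (forall x, aUIJ K I J x /\ aUIJ K J L (aphi K I J x) -> aUIJ K I L x)).

Definition is_filtered {X : Type} (K : atlas X) : Prop :=
  (forall I J : {set 'I_(aN K)}, inIK K J -> I \subset J -> tclosed (topE (aK K J)) (aE K I J)) /\
  (forall J : {set 'I_(aN K)}, inIK K J ->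
      (forall e, aE K J J e) /\
      (forall e, aE K set0 J e <-> exists x, e = zero (aK K J) x)) /\
  (forall I J L : {set 'I_(aN K)}, inIK K J -> inIK K L -> I \subset J -> J \proper L ->
      forall e' : cE (aK K L),
        (exists e, aUIJ K J L (pr _ e) /\ aE K I J e /\ aPhi K J L e = e') <->
        (aE K I L e' /\ exists y, aUIJ K J L y /\ aphi K J L y = pr _ e')) /\
  (forall I H J : {set 'I_(aN K)}, inIK K J -> I \subset J -> H \subset J ->
      forall e, (aE K I J e /\ aE K H J e) <-> aE K (I :&: H) J e) /\
  (* (iv) im phi_IJ is an open subset of s_J^{-1}(E_IJ) *)
  (forall I J : {set 'I_(aN K)}, inIK K I -> inIK K J -> I \proper J ->
      (forall x, aUIJ K I J x -> aE K I J (sec _ (aphi K I J x))) /\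
      subspace (topU (aK K J)) (fun y => aE K I J (sec _ y))
        (fun y => exists x, aUIJ K I J x /\ aphi K I J x = proj1_sig y)).

Definition is_tame {X : Type} (K : atlas X) : Prop :=
  (forall I J L : {set 'I_(aN K)}, inIK K I -> inIK K J -> inIK K L -> I \subset J -> I \subset L ->
      forall x, (aUIJ K I J x /\ aUIJ K I L x) <->
                (inIK K (J :|: L) /\ aUIJ K I (J :|: L) x)) /\
  (forall I J L : {set 'I_(aN K)}, inIK K I -> inIK K J -> inIK K L -> I \subset J -> J \subset L ->
      forall y, (exists x, aUIJ K I J x /\ aUIJ K I L x /\ aphi K I J x = y) <->
                (aUIJ K J L y /\ aE K I J (sec _ y))).

Definition tame_top_atlas {X : Type} (opX : topology X) (K : atlas X) : Prop :=
  is_top_atlas opX K /\ is_filtered K /\ is_tame K.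

Definition IKtype {X : Type} (K : atlas X) := {I : {set 'I_(aN K)} | inIK K I}.

Definition Obj {X : Type} (K : atlas X) : Type :=
  {I : IKtype K & cU (aK K (proj1_sig I))}.

Definition topObj {X : Type} (K : atlas X) : topology (Obj K) :=
  fun V => forall I : IKtype K,
    topU (aK K (proj1_sig I)) (fun x => V (existT _ I x)).

Definition step {X : Type} (K : atlas X) (a b : Obj K) : Prop :=
  proj1_sig (projT1 a) \subset proj1_sig (projT1 b) /\
  aUIJ K (proj1_sig (projT1 a)) (proj1_sig (projT1 b)) (projT2 a) /\
  aphi K (proj1_sig (projT1 a)) (proj1_sig (projT1 b)) (projT2 a) = projT2 b.

Definition simK {X : Type} (K : atlas X) : Obj K -> Obj K -> Prop :=
  clos_refl_sym_trans (Obj K) (step K).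

Definition virt {X : Type} (K : atlas X) : Type := qtype (simK K).

Definition piK {X : Type} (K : atlas X) (a : Obj K) : virt K := qproj (simK K) a.

Definition topVirt {X : Type} (K : atlas X) : topology (virt K) :=
  quotient_top (topObj K) (simK K).

Definition piset {X : Type} {K : atlas X} (A : Obj K -> Prop) : virt K -> Prop :=
  fun p => exists a, A a /\ piK K a = p.

Definition normtop {X : Type} {K : atlas X} (A : Obj K -> Prop)
  : topology {p : virt K | piset A p} :=
  subspace (topVirt K) (piset A).

Definition piA {X : Type} {K : atlas X} (A : Obj K -> Prop)
  (a : {a : Obj K | A a}) : {p : virt K | piset A p} :=
  exist _ (piK K (proj1_sig a)) (ex_intro _ (proj1_sig a) (conj (proj2_sig a) erefl)).

(* |A| : pi_K(A) with the quotient topology induced by pi_K|_A *)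
Definition bartop {X : Type} {K : atlas X} (A : Obj K -> Prop)
  : topology {p : virt K | piset A p} :=
  fun W => subspace (topObj K) A (fun a => W (piA A a)).

(* Main.v *)
Require Import Defs.
From mathcomp Require Import all_boot.
From Stdlib Require Import Reals Relations.
From Stdlib Require Import Lra Classical ClassicalEpsilon FunctionalExtensionality PropExtensionality ProofIrrelevance.
From Stdlib Require Eqdep.
From mathcomp Require Import zify.

Section Atlas.
Context {X : Type} {opX : topology X} {K : atlas X}.
Context (hK : tame_top_atlas opX K).

Implicit Types I J L H : {set 'I_(aN K)}.
Local Notation U := (aUIJ K).
Local Notation ph := (aphi K).
Local Notation Ph := (aPhi K).
Local Notation E := (aE K).

Lemma hcharts {I} : inIK K I -> is_chart opX (aK K I).
Proof. by case: hK => [[_ [h _]] _]; apply: h. Qed.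
Lemma hfoot {J} : inIK K J -> forall x, foot (aK K J) x <-> (forall i, i \in J -> foot (aK K [set i]) x).
Proof. by case: hK => [[_ [_ [h _]]] _]; apply: h. Qed.
Lemma hcc {I J} : inIK K I -> inIK K J -> I \proper J -> coord_change (U I J) (Ph I J) (ph I J).
Proof. by case: hK => [[_ [_ [_ [h _]]]] _]; apply: h. Qed.
Lemma hU_id {I} : inIK K I -> forall x, U I I x.
Proof. by case: hK => [[_ [_ [_ [_ [h _]]]]] _] hI x; case: (h I hI x). Qed.
Lemma hph_id {I} : inIK K I -> forall x, ph I I x = x.
Proof. by case: hK => [[_ [_ [_ [_ [h _]]]]] _] hI x; case: (h I hI x). Qed.
Lemma hcocE {I J L} : inIK K I -> inIK K J -> inIK K L -> I \proper J -> J \proper L ->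
  forall e, (U I J (pr _ e) /\ U J L (ph I J (pr _ e))) /\ U I L (pr _ e) ->
                 Ph J L (Ph I J e) = Ph I L e.
Proof. case: hK => [[_ [_ [_ [_ [_ h]]]]] _] hI hJ hL p1 p2. by case: (h I J L hI hJ hL p1 p2). Qed.
Lemma hcocU {I J L} : inIK K I -> inIK K J -> inIK K L -> I \proper J -> J \proper L ->
  forall x, U I J x /\ U J L (ph I J x) -> U I L x.
Proof. case: hK => [[_ [_ [_ [_ [_ h]]]]] _] hI hJ hL p1 p2. by case: (h I J L hI hJ hL p1 p2). Qed.

Lemma hEcl {I J} : inIK K J -> I \subset J -> tclosed (topE (aK K J)) (E I J).
Proof. by case: hK => [_ [[h _] _]]; apply: h. Qed.
Lemma hEJJ {J} : inIK K J -> forall e, E J J e.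
Proof. by case: hK => [_ [[_ [h _]] _]] hJ; case: (h J hJ). Qed.
Lemma hE0 {J} : inIK K J -> forall e, E set0 J e <-> exists x, e = zero (aK K J) x.
Proof. by case: hK => [_ [[_ [h _]] _]] hJ; case: (h J hJ). Qed.
Lemma hEii {I J L} : inIK K J -> inIK K L -> I \subset J -> J \proper L ->
      forall e' : cE (aK K L),
        (exists e, U J L (pr _ e) /\ E I J e /\ Ph J L e = e') <->
        (E I L e' /\ exists y, U J L y /\ ph J L y = pr _ e').
Proof. by case: hK => [_ [[_ [_ [h _]]] _]]; apply: h. Qed.
Lemma hEiii {I H J} : inIK K J -> I \subset J -> H \subset J ->
      forall e, (E I J e /\ E H J e) <-> E (I :&: H) J e.
Proof. by case: hK => [_ [[_ [_ [_ [h _]]]] _]]; apply: h. Qed.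
Lemma hEiv {I J} : inIK K I -> inIK K J -> I \proper J ->
      (forall x, U I J x -> E I J (sec _ (ph I J x))).
Proof. by case: hK => [_ [[_ [_ [_ [_ h]]]] _]] hI hJ p; case: (h I J hI hJ p). Qed.
Lemma ht1 {I J L} : inIK K I -> inIK K J -> inIK K L -> I \subset J -> I \subset L ->
      forall x, (U I J x /\ U I L x) <-> (inIK K (J :|: L) /\ U I (J :|: L) x).
Proof. by case: hK => [_ [_ [h _]]]; apply: h. Qed.
Lemma ht2 {I J L} : inIK K I -> inIK K J -> inIK K L -> I \subset J -> J \subset L ->
      forall y, (exists x, U I J x /\ U I L x /\ ph I J x = y) <->
                (U J L y /\ E I J (sec _ y)).
Proof. by case: hK => [_ [_ [_ h]]]; apply: h. Qed.

Lemma ch_prz {I} : inIK K I -> forall x, pr (aK K I) (zero (aK K I) x) = x.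
Proof. move=> hI; have := @hcharts I hI; by do 11! case=> _; case=> h _. Qed.
Lemma ch_prs {I} : inIK K I -> forall x, pr (aK K I) (sec (aK K I) x) = x.
Proof. move=> hI; have := @hcharts I hI; by do 12! case=> _; case=> h _. Qed.

Section CC.
Context {I J : {set 'I_(aN K)}} (hI : inIK K I) (hJ : inIK K J) (hIJ : I \proper J).
Let cc := @hcc I J hI hJ hIJ.
Lemma cc_open : topU (aK K I) (U I J). Proof. by case: cc. Qed.
Lemma cc_zero x (h : sec (aK K I) x = zero (aK K I) x) :
  U I J x <-> (foot (aK K I) (psi (aK K I) (exist _ x h)) /\ foot (aK K J) (psi (aK K I) (exist _ x h))).
Proof. by case: cc => _ [H _]; apply: H. Qed.
Lemma cc_Phi_inj e e' : U I J (pr _ e) -> U I J (pr _ e') -> Ph I J e = Ph I J e' -> e = e'.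
Proof.
case: cc => _ [_ [[H _] _]] h h' E.
by have := H (exist _ e h) (exist _ e' h') E => [[]].
Qed.
Lemma cc_phi_emb : embedding (subspace (topU (aK K I)) (U I J)) (topU (aK K J)) (fun x => ph I J (proj1_sig x)).
Proof. by case: cc => _ [_ [_ [H _]]]. Qed.
Lemma cc_phi_inj x x' : U I J x -> U I J x' -> ph I J x = ph I J x' -> x = x'.
Proof.
case: cc_phi_emb => H _ h h' E.
by have := H (exist _ x h) (exist _ x' h') E => [[]].
Qed.
Lemma cc_pr e : U I J (pr _ e) -> pr _ (Ph I J e) = ph I J (pr _ e).
Proof. by case: cc => _ [_ [_ [_ [H _]]]]; apply: H. Qed.
Lemma cc_z x : U I J x -> zero _ (ph I J x) = Ph I J (zero _ x).
Proof. by case: cc => _ [_ [_ [_ [_ [H _]]]]]; apply: H. Qed.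
Lemma cc_s x : U I J x -> sec _ (ph I J x) = Ph I J (sec _ x).
Proof. by case: cc => _ [_ [_ [_ [_ [_ [H _]]]]]]; apply: H. Qed.
Lemma cc_psi x (h : sec (aK K I) x = zero (aK K I) x) : U I J x ->
     exists h' : sec (aK K J) (ph I J x) = zero (aK K J) (ph I J x),
       psi (aK K J) (exist _ (ph I J x) h') = psi (aK K I) (exist _ x h).
Proof. by case: cc => _ [_ [_ [_ [_ [_ [_ H]]]]]]; apply: H. Qed.
End CC.



Lemma inIK_sub {I J} : inIK K J -> I \subset J -> I != set0 -> inIK K I.
Proof. move=> [_ [x hx]] sIJ n0; split=> //; exists x => i iI; apply: hx; exact: (subsetP sIJ). Qed.

Lemma phi_inj {I J} : inIK K I -> inIK K J -> I \subset J ->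
  forall {x x'}, U I J x -> U I J x' -> ph I J x = ph I J x' -> x = x'.
Proof.
move=> hI hJ sIJ x x'; case: (eqVproper sIJ) => [eIJ|p].
- by subst J; rewrite !hph_id.
- exact: cc_phi_inj.
Qed.

Lemma Eim {I J} : inIK K I -> inIK K J -> I \subset J ->
  forall {x}, U I J x -> E I J (sec _ (ph I J x)).
Proof.
move=> hI hJ sIJ x u; case: (eqVproper sIJ) => [eIJ|p].
- by subst J; apply: hEJJ.
- exact: hEiv.
Qed.

Lemma coc {H I L} : inIK K H -> inIK K I -> inIK K L -> H \subset I -> I \subset L ->
  forall {v}, U H I v -> U I L (ph H I v) -> U H L v /\ ph H L v = ph I L (ph H I v).
Proof.
move=> hH hI hL sHI sIL v u1 u2.
case: (eqVproper sHI) => [eHI|pHI].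
  by subst I; rewrite hph_id in u2 *.
case: (eqVproper sIL) => [eIL|pIL].
  by subst L; rewrite hph_id.
have pHL := proper_sub_trans pHI sIL.
have uHL : U H L v by apply: (hcocU hH hI hL pHI pIL); split.
split=> //.
set e := zero (aK K H) v.
have pe : pr _ e = v by rewrite /e ch_prz.
have hPhHI : pr _ (Ph H I e) = ph H I v by rewrite cc_pr // pe.
have E1 : Ph I L (Ph H I e) = Ph H L e.
  by apply: (hcocE hH hI hL pHI pIL); rewrite pe; split.
have -> : ph H L v = pr _ (Ph H L e) by rewrite cc_pr ?pe.
by rewrite -E1 cc_pr ?hPhHI.
Qed.

Lemma desc {S T L} : inIK K S -> inIK K T -> inIK K L -> S \subset T -> T \subset L ->
  forall {t v}, U T L t -> U S L v -> ph T L t = ph S L v -> U S T v /\ ph S T v = t.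
Proof.
move=> hS hT hL sST sTL t v ut uv e.
case: (eqVproper sTL) => [eTL|pTL].
  by subst T; rewrite (hph_id hL) in e; subst t.
case: (eqVproper sST) => [eST|pST].
  subst S; rewrite (hph_id hS); split; first exact: hU_id.
  by apply: esym; apply: (phi_inj hS hL sTL ut uv e).
have pSL := proper_sub_trans pST sTL.
have hEt : E S T (sec _ t).
  have : exists e, U T L (pr _ e) /\ E S T e /\ Ph T L e = Ph T L (sec _ t).
    apply/(hEii hT hL sST pTL); split.
    - rewrite -cc_s // e; exact: hEiv.
    - by exists t; split=> //; rewrite cc_pr ?ch_prs.
  case=> e0 [u0 [E0 Q]].
  by have <- := cc_Phi_inj hT hL pTL e0 (sec _ t) u0 (ltac:(by rewrite ch_prs)) Q.
have [v' [u1 [u2 e1]]] := (ht2 hS hT hL sST sTL t).2 (conj ut hEt).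
have [_ e2] := coc hS hT hL sST sTL u1 (ltac:(by rewrite e1)).
have vv : v' = v.
  by apply: (phi_inj hS hL (subset_trans sST sTL) u2 uv); rewrite e2 e1 e.
by subst v'; split.
Qed.

Lemma up {J A B} : inIK K J -> inIK K A -> inIK K B -> J \subset A -> J \subset B ->
  forall {y}, U J A y -> U J B y -> inIK K (A :|: B) /\ U J (A :|: B) y.
Proof. move=> hJ hA hB sA sB y uA uB; exact: (ht1 hJ hA hB sA sB y).1. Qed.

Lemma t2 {I J L} : inIK K I -> inIK K J -> inIK K L -> I \subset J -> J \subset L ->
  forall {x}, U I J x -> U I L x -> U J L (ph I J x).
Proof.
move=> hI hJ hL sIJ sJL x u1 u2.
by have [] := (ht2 hI hJ hL sIJ sJL (ph I J x)).1 (ex_intro _ x (conj u1 (conj u2 erefl))).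
Qed.

Definition oI (a : Obj K) := proj1_sig (projT1 a).

Definition Rrel (a b : Obj K) : Prop :=
  inIK K (oI a :|: oI b) /\ U (oI a) (oI a :|: oI b) (projT2 a) /\
  U (oI b) (oI a :|: oI b) (projT2 b) /\
  ph (oI a) (oI a :|: oI b) (projT2 a) = ph (oI b) (oI a :|: oI b) (projT2 b).

Lemma Rrefl a : Rrel a a.
Proof.
case: a => [[I hI] x]; rewrite /Rrel /= setUid; split=> //.
by split; [exact: hU_id|split; [exact: hU_id|]].
Qed.

Lemma Rsym a b : Rrel a b -> Rrel b a.
Proof.
case: a => [[I hI] x]; case: b => [[J hJ] y]; rewrite /Rrel /= setUC.
by case=> [h [u1 [u2 e]]]; split=> //; split=> //; split.
Qed.

Lemma Rtrans a b c : Rrel a b -> Rrel b c -> Rrel a c.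
Proof.
case: a => [[I hI] x]; case: b => [[J hJ] y]; case: c => [[L hL] z]; rewrite /Rrel /=.
move=> [hA [uIA [uJA eIJ]]] [hB [uJB [uLB eJL]]].
set A := I :|: J in hA uIA uJA eIJ; set B := J :|: L in hB uJB uLB eJL.
have sIA : I \subset A := subsetUl _ _. have sJA : J \subset A := subsetUr _ _.
have sJB : J \subset B := subsetUl _ _. have sLB : L \subset B := subsetUr _ _.
have [hM uJM] := up hJ hA hB sJA sJB uJA uJB.
set M := A :|: B in hM uJM.
have sAM : A \subset M := subsetUl _ _. have sBM : B \subset M := subsetUr _ _.
have uAM := t2 hJ hA hM sJA sAM uJA uJM.
have uBM := t2 hJ hB hM sJB sBM uJB uJM.
have [_ eJ] := coc hJ hA hM sJA sAM uJA uAM.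
have [_ eJ'] := coc hJ hB hM sJB sBM uJB uBM.
have [uIM eI] := coc hI hA hM sIA sAM uIA (ltac:(by rewrite eIJ)).
have [uLM eL] := coc hL hB hM sLB sBM uLB (ltac:(by rewrite -eJL)).
have eIL : ph I M x = ph L M z by rewrite eI eIJ -eJ eJ' eJL -eL.
have sIM := subset_trans sIA sAM. have sLM := subset_trans sLB sBM.
set N := I :|: L.
have sIN : I \subset N := subsetUl _ _. have sLN : L \subset N := subsetUr _ _.
have sNM : N \subset M by rewrite /N subUset sIM sLM.
have hN : inIK K N.
  apply: (inIK_sub hM sNM); rewrite setU_eq0 negb_and; have [-> _] := hI; done.
have EN : E N M (sec _ (ph I M x)).
  have := Eim hI hM sIM uIM; rewrite -{1}(setIidPl sIN) => h.
  exact: ((hEiii hM sIM sNM _).2 h).2.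
have [x' [ux' [_ ex']]] := (ht2 hN hM hM sNM (subxx M) _).2 (conj (hU_id hM _) EN).
have [uIN eIN] := desc hI hN hM sIN sNM ux' uIM ex'.
have [uLN eLN] := desc hL hN hM sLN sNM ux' uLM (ltac:(by rewrite ex' eIL)).
by split=> //; split=> //; split=> //; rewrite eIN eLN.
Qed.

Lemma step_R a b : step K a b -> Rrel a b.
Proof.
case: a => [[I hI] x]; case: b => [[J hJ] y]; rewrite /step /Rrel /=.
move=> [sIJ [u e]]; rewrite (setUidPr sIJ); split=> //; split=> //.
by split; [exact: hU_id | rewrite hph_id].
Qed.

Lemma R_simK a b : Rrel a b -> simK K a b.
Proof.
case: a => [[I hI] x]; case: b => [[J hJ] y]; rewrite /Rrel /=.
move=> [h [u1 [u2 e]]].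
pose c : Obj K := existT _ (exist _ (I :|: J) h) (ph I (I :|: J) x).
apply: (rst_trans _ _ _ c); first by apply: rst_step; split; [exact: subsetUl| split].
apply: rst_sym; apply: rst_step; split; first exact: subsetUr.
by split=> //=; rewrite e.
Qed.

Lemma simK_R a b : simK K a b -> Rrel a b.
Proof.
elim=> {a b} [a b /step_R //|a|a b _ /Rsym //|a b c _ h1 _ h2].
- exact: Rrefl.
- exact: Rtrans h1 h2.
Qed.

End Atlas.

Definition mopen {T} (d : T -> T -> R) (V : T -> Prop) :=
  forall x, V x -> exists eps, (0 < eps)%R /\ forall y, (d x y < eps)%R -> V y.

Definition mchoose {T} (op : topology T) : T -> T -> R :=
  match excluded_middle_informative (metrizable op) with
  | left h => proj1_sig (constructive_indefinite_description _ h)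
  | right _ => fun _ _ => 0%R end.

Lemma mchoose_spec {T} {op : topology T} : metrizable op ->
  is_metric (mchoose op) /\ forall V, op V <-> mopen (mchoose op) V.
Proof.
move=> h; rewrite /mchoose; case: excluded_middle_informative => // h'.
by case: (constructive_indefinite_description _ h').
Qed.

Definition conv_top {T} (op : topology T) (xs : nat -> T) (x : T) :=
  forall V, op V -> V x -> exists N, forall n, (N <= n)%N -> V (xs n).

Lemma conv_cont {A B} {opA : topology A} {opB : topology B} {f xs x} :
  continuous opA opB f -> conv_top opA xs x -> conv_top opB (fun n => f (xs n)) (f x).
Proof. by move=> hf hc V hV Vx; apply: (hc _ (hf V hV)). Qed.

Lemma conv_closed {T} {op : topology T} {C xs x} :
  tclosed op C -> conv_top op xs x -> (forall n, C (xs n)) -> C x.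
Proof.
move=> hC hc hn; apply: NNPP => nC.
have [N HN] := hc _ hC nC; exact: (HN N (leqnn N) (hn N)).
Qed.

Lemma conv_sub {T} {op : topology T} {S} {zs : nat -> {x | S x}} {z} :
  conv_top op (fun n => proj1_sig (zs n)) (proj1_sig z) -> conv_top (subspace op S) zs z.
Proof.
move=> hc V [W [hW HW]] Vz.
have [N HN] := hc W hW ((HW z).1 Vz).
by exists N => n /HN /(HW (zs n)).2.
Qed.

Lemma conv_sub_inv {T} {op : topology T} {S} {zs : nat -> {x | S x}} {z} :
  conv_top (subspace op S) zs z -> conv_top op (fun n => proj1_sig (zs n)) (proj1_sig z).
Proof.
move=> hc V hV Vz.
have [|//|N HN] := hc (fun y => V (proj1_sig y)); first by exists V.
by exists N.
Qed.

Lemma conv_emb {T B} {op : topology T} {opB : topology B} {S} {f : T -> B}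
  {zs : nat -> {x | S x}} {z} :
  embedding (subspace op S) opB (fun y => f (proj1_sig y)) ->
  conv_top opB (fun n => f (proj1_sig (zs n))) (f (proj1_sig z)) ->
  conv_top (subspace op S) zs z.
Proof.
move=> [_ [_ he]] hc V hV Vz.
have [W [hW HW]] := he V hV.
have [N HN] := hc W hW ((HW z).1 Vz).
by exists N => n /HN /(HW (zs n)).2.
Qed.

Section Metric.
Context {T : Type} {d : T -> T -> R} (hd : is_metric d).

Lemma md0 x : d x x = 0%R. Proof. by case: hd => _ [h _]; apply: (proj2 (h x x)). Qed.
Lemma mdge0 x y : (0 <= d x y)%R. Proof. by case: hd. Qed.
Lemma mdsym x y : d x y = d y x. Proof. by case: hd => _ [_ [h _]]. Qed.
Lemma mdtri x y z : (d x z <= d x y + d y z)%R. Proof. by case: hd => _ [_ [_ h]]. Qed.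
Lemma mdeq x y : d x y = 0%R -> x = y. Proof. by case: hd => _ [h _]; apply: (proj1 (h x y)). Qed.

Lemma ball_open x r : mopen d (fun y => (d x y < r)%R).
Proof.
move=> y hy; exists (r - d x y)%R; split; first lra.
move=> z hz; have := mdtri x y z; lra.
Qed.

Context {op : topology T} (hop : forall V, op V <-> mopen d V).

Lemma conv_ball {xs x} : (forall n, (d x (xs n) < / INR n.+1)%R) -> conv_top op xs x.
Proof.
move=> hn V /hop hV Vx.
have [e [e0 He]] := hV x Vx.
have [N [HN N0]] := archimed_cor1 e e0.
exists N => n hn'; apply: He.
apply: (Rlt_le_trans _ _ _ (hn n)).
apply: Rle_trans (Rlt_le _ _ HN).
apply: Rinv_le_contravar; first by apply: lt_0_INR.
apply: le_INR; apply/leP; exact: (leq_trans hn' (leqnSn n)).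
Qed.

Lemma conv_uniq {xs x y} : conv_top op xs x -> conv_top op xs y -> x = y.
Proof.
move=> hx hy; apply: NNPP => nxy.
have r0 : (0 < d x y)%R.
  have := mdge0 x y; case/Rle_lt_or_eq_dec => // /esym /mdeq //.
have [N1 H1] := hx _ ((hop _).2 (ball_open x (d x y / 2))) (ltac:(rewrite /= md0; lra)).
have [N2 H2] := hy _ ((hop _).2 (ball_open y (d x y / 2))) (ltac:(rewrite /= md0; lra)).
have h1 := H1 (maxn N1 N2) (leq_maxl _ _).
have h2 := H2 (maxn N1 N2) (leq_maxr _ _).
move: h1 h2 => /= h1 h2.
have := mdtri x (xs (maxn N1 N2)) y; have := mdsym (xs (maxn N1 N2)) y; lra.
Qed.

Lemma mopen_op_ball x r : op (fun y => (d x y < r)%R).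
Proof. by apply/hop; apply: ball_open. Qed.

End Metric.

Section CG.
Context {X : Type} {opX : topology X} {K : atlas X}.
Context (hK : tame_top_atlas opX K).
Context (hXmet : metrizable opX).
Implicit Types I J L H : {set 'I_(aN K)}.
Local Notation U := (aUIJ K).
Local Notation ph := (aphi K).
Local Notation Ph := (aPhi K).
Local Notation E := (aE K).

Definition mkO {I} (hI : inIK K I) (x : cU (aK K I)) : Obj K :=
  existT (fun I0 : IKtype K => cU (aK K (proj1_sig I0))) (exist _ I hI) x.

Section Chart.
Context {I : {set 'I_(aN K)}} (hI : inIK K I).
Let hc := hcharts hK hI.
Lemma ch_metU : metrizable (topU (aK K I)). Proof. have h := hc; by do 4! case: h => _ h; case: h. Qed.
Lemma ch_metE : metrizable (topE (aK K I)). Proof. have h := hc; by do 7! case: h => _ h; case: h. Qed.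
Lemma ch_contz : continuous (topU (aK K I)) (topE (aK K I)) (zero (aK K I)).
Proof. have h := hc; by do 9! case: h => _ h; case: h. Qed.
Lemma ch_conts : continuous (topU (aK K I)) (topE (aK K I)) (sec (aK K I)).
Proof. have h := hc; by do 10! case: h => _ h; case: h. Qed.
Lemma ch_emb : embedding (subspace (topU (aK K I)) (zero_set (aK K I))) opX (psi (aK K I)).
Proof. have h := hc; by do 14! case: h => _ h; case: h. Qed.
Lemma ch_footpsi y : foot (aK K I) y <-> exists z, psi (aK K I) z = y.
Proof. have h := hc; by do 15! case: h => _ h. Qed.

Lemma zero_lim {xs x} : conv_top (topU (aK K I)) xs x ->
  (forall n, sec _ (xs n) = zero _ (xs n)) -> sec _ x = zero _ x.
Proof.
move=> cx hz.
have c1 := conv_cont ch_conts cx. have c2 := conv_cont ch_contz cx.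
have e : (fun n => sec (aK K I) (xs n)) = (fun n => zero (aK K I) (xs n)) by apply: functional_extensionality.
rewrite e in c1.
have [hm ho] := mchoose_spec ch_metE.
exact: (conv_uniq hm ho c1 c2).
Qed.

Lemma psi_lim {xs x} (hx : forall n, zero_set (aK K I) (xs n)) (h : zero_set (aK K I) x) :
  conv_top (topU (aK K I)) xs x ->
  conv_top opX (fun n => psi (aK K I) (exist _ (xs n) (hx n))) (psi (aK K I) (exist _ x h)).
Proof.
move=> cx; have [_ [hc1 _]] := ch_emb.
apply: (conv_cont hc1); apply: conv_sub => //.
Qed.

Lemma psi_inj {x x'} (h : zero_set (aK K I) x) (h' : zero_set (aK K I) x') :
  psi (aK K I) (exist _ x h) = psi (aK K I) (exist _ x' h') -> x = x'.
Proof. by have [hi _] := ch_emb => /hi [->]. Qed.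

End Chart.

Lemma psi_pi {I} (hI : inIK K I) x (h h' : zero_set (aK K I) x) :
  psi (aK K I) (exist _ x h) = psi (aK K I) (exist _ x h').
Proof. by rewrite (proof_irrelevance _ h h'). Qed.

Lemma E_lim {I J} (hJ : inIK K J) (sIJ : I \subset J) {ys y} :
  conv_top (topU (aK K J)) ys y -> (forall n, E I J (sec _ (ys n))) -> E I J (sec _ y).
Proof.
move=> cy hn.
have hcl : tclosed (topU (aK K J)) (fun z => E I J (sec _ z)).
  exact: (ch_conts hJ _ (hEcl hK hJ sIJ)).
exact: (conv_closed hcl cy hn).
Qed.

Lemma psi_fw {I L} (hI : inIK K I) (hL : inIK K L) (sIL : I \subset L) {x}
  (hx : zero_set (aK K I) x) : U I L x ->
  exists h' : zero_set (aK K L) (ph I L x), psi (aK K L) (exist _ (ph I L x) h') = psi (aK K I) (exist _ x hx).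
Proof.
move=> u; case: (eqVproper sIL) => [eIL|p].
  by subst L; rewrite (hph_id hK hI); exists hx.
exact: (cc_psi hK hI hL p).
Qed.

Lemma zero_back {I L} (hI : inIK K I) (hL : inIK K L) (sIL : I \subset L) {x} :
  U I L x -> sec _ (ph I L x) = zero _ (ph I L x) -> sec _ x = zero _ x.
Proof.
move=> u; case: (eqVproper sIL) => [eIL|p].
  by subst L; rewrite (hph_id hK hI).
rewrite (cc_s hK hI hL p _ u) (cc_z hK hI hL p _ u) => e.
apply: (cc_Phi_inj hK hI hL p _ _ _ _ e); by rewrite ?(ch_prs hK hI) ?(ch_prz hK hI).
Qed.

Lemma back_conv {H I} (hH : inIK K H) (hI : inIK K I) (sHI : H \subset I) {vs v} :
  (forall n, U H I (vs n)) -> U H I v ->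
  conv_top (topU (aK K I)) (fun n => ph H I (vs n)) (ph H I v) ->
  conv_top (topU (aK K H)) vs v.
Proof.
move=> un u c; case: (eqVproper sHI) => [eHI|p].
  subst I; rewrite (hph_id hK hH) in c.
  by rewrite (_ : (fun n => ph H H (vs n)) = vs) in c; last by apply: functional_extensionality => n; rewrite (hph_id hK hH).
pose zs n : {y | U H I y} := exist _ (vs n) (un n).
have := conv_emb (zs := zs) (z := exist _ v u) (cc_phi_emb hK hH hI p) c.
by move/conv_sub_inv.
Qed.

Theorem CG {I J} (hI : inIK K I) (hJ : inIK K J) xs x ys y :
  conv_top (topU (aK K I)) xs x -> conv_top (topU (aK K J)) ys y ->
  (forall n, Rrel (mkO hI (xs n)) (mkO hJ (ys n))) -> simK K (mkO hI x) (mkO hJ y).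
Proof.
move=> cx cy hR.
have hL : inIK K (I :|: J) := (hR 0%N).1.
set L := I :|: J in hL hR.
have uI n : U I L (xs n) := (hR n).2.1.
have uJ n : U J L (ys n) := (hR n).2.2.1.
have eW n : ph I L (xs n) = ph J L (ys n) := (hR n).2.2.2.
have sIL : I \subset L := subsetUl _ _. have sJL : J \subset L := subsetUr _ _.
have EH n : E (I :&: J) L (sec _ (ph I L (xs n))).
  apply: (hEiii hK hL sIL sJL _).1; split; first exact: (Eim hK hI hL sIL (uI n)).
  rewrite eW; exact: (Eim hK hJ hL sJL (uJ n)).
case: (eqVneq (I :&: J) set0) => [H0 | Hn0].
- have zw n : sec _ (ph I L (xs n)) = zero _ (ph I L (xs n)).
    have := EH n; rewrite H0 => /(hE0 hK hL) [z ez].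
    have : ph I L (xs n) = z by rewrite -(ch_prs hK hL (ph I L (xs n))) ez (ch_prz hK hL).
    by move=> ez'; rewrite ez -ez'.
  have zx n := zero_back hI hL sIL (uI n) (zw n).
  have zy n : sec _ (ys n) = zero _ (ys n).
    apply: (zero_back hJ hL sJL (uJ n)); rewrite -eW; exact: zw.
  have zx0 := zero_lim hI cx zx. have zy0 := zero_lim hJ cy zy.
  have eps n : psi (aK K I) (exist _ (xs n) (zx n)) = psi (aK K J) (exist _ (ys n) (zy n)).
    have [h1 e1] := psi_fw hI hL sIL (zx n) (uI n).
    have [h2 e2] := psi_fw hJ hL sJL (zy n) (uJ n).
    rewrite -e1 -e2; clear e1 e2; move: h1 h2; rewrite eW => h1 h2; exact: (psi_pi hL).
  have c1 := psi_lim hI zx zx0 cx. have c2 := psi_lim hJ zy zy0 cy.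
  rewrite (_ : (fun n => psi (aK K I) (exist _ (xs n) (zx n))) = (fun n => psi (aK K J) (exist _ (ys n) (zy n)))) in c1;
    last by apply: functional_extensionality.
  have [hm ho] := mchoose_spec hXmet.
  have ez := conv_uniq hm ho c1 c2.
  set z := psi (aK K I) (exist _ x zx0) in ez.
  have fI : foot (aK K I) z by apply/(ch_footpsi hI); eexists.
  have fJ : foot (aK K J) z by apply/(ch_footpsi hJ); rewrite ez; eexists.
  have fL : foot (aK K L) z.
    apply/(hfoot hK hL) => i; rewrite in_setU; case/orP => Hi.
    - exact: ((hfoot hK hI z).1 fI i Hi).
    - exact: ((hfoot hK hJ z).1 fJ i Hi).
  have ux : U I L x.
    case: (eqVproper sIL) => [eIL|p]; first by rewrite -eIL; exact: (hU_id hK hI).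
    by apply/(cc_zero hK hI hL p x zx0).
  have uy : U J L y.
    case: (eqVproper sJL) => [eJL|p]; first by rewrite -eJL; exact: (hU_id hK hJ).
    by apply/(cc_zero hK hJ hL p y zy0); rewrite -ez.
  apply: R_simK; split=> //; split=> //; split=> //=.
  have [h1 e1] := psi_fw hI hL sIL zx0 ux.
  have [h2 e2] := psi_fw hJ hL sJL zy0 uy.
  apply: (psi_inj hL h1 h2); by rewrite e1 e2.
- set H := I :&: J in EH Hn0.
  have sHI : H \subset I := subsetIl _ _. have sHJ : H \subset J := subsetIr _ _.
  have sHL := subset_trans sHI sIL.
  have hH : inIK K H := inIK_sub hI sHI Hn0.
  have vex n : exists v, U H L v /\ ph H L v = ph I L (xs n).
    have [v [u1 [_ e1]]] := (ht2 hK hH hL hL sHL (subxx L) _).2 (conj (hU_id hK hL _) (EH n)).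
    by exists v.
  pose vs n := proj1_sig (constructive_indefinite_description _ (vex n)).
  have uv n : U H L (vs n) := (proj2_sig (constructive_indefinite_description _ (vex n))).1.
  have ev n : ph H L (vs n) = ph I L (xs n) := (proj2_sig (constructive_indefinite_description _ (vex n))).2.
  have dI n := desc hK hH hI hL sHI sIL (uI n) (uv n) (esym (ev n)).
  have dJ n := desc hK hH hJ hL sHJ sJL (uJ n) (uv n) (ltac:(by rewrite ev eW)).
  have EI : E H I (sec _ x).
    apply: (E_lim hI sHI cx) => n; rewrite -(dI n).2; exact: (Eim hK hH hI sHI (dI n).1).
  have EJ : E H J (sec _ y).
    apply: (E_lim hJ sHJ cy) => n; rewrite -(dJ n).2; exact: (Eim hK hH hJ sHJ (dJ n).1).
  have [v [uvI [_ evI]]] := (ht2 hK hH hI hI sHI (subxx I) x).2 (conj (hU_id hK hI x) EI).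
  have [v' [uvJ [_ evJ]]] := (ht2 hK hH hJ hJ sHJ (subxx J) y).2 (conj (hU_id hK hJ y) EJ).
  have c1 : conv_top (topU (aK K H)) vs v.
    apply: (back_conv hH hI sHI (fun n => (dI n).1) uvI).
    rewrite evI (_ : (fun n => ph H I (vs n)) = xs) //; apply: functional_extensionality => n; exact: (dI n).2.
  have c2 : conv_top (topU (aK K H)) vs v'.
    apply: (back_conv hH hJ sHJ (fun n => (dJ n).1) uvJ).
    rewrite evJ (_ : (fun n => ph H J (vs n)) = ys) //; apply: functional_extensionality => n; exact: (dJ n).2.
  have [hm ho] := mchoose_spec (ch_metU hH).
  have vv := conv_uniq hm ho c1 c2; subst v'.
  apply: (rst_trans _ _ _ (mkO hH v)).
  + by apply: rst_sym; apply: rst_step; split=> //; split.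
  + by apply: rst_step; split=> //; split.
Qed.

End CG.

Lemma set_ext {T} (V W : T -> Prop) : (forall x, V x <-> W x) -> V = W.
Proof. move=> h; apply: functional_extensionality => x; apply: propositional_extensionality; exact: h. Qed.

Lemma sig_eq {T} {P : T -> Prop} (x y : {a | P a}) : proj1_sig x = proj1_sig y -> x = y.
Proof. case: x => a ha; case: y => b hb /= e; subst b; by rewrite (proof_irrelevance _ ha hb). Qed.

Definition cpt {T} (op : topology T) (S : T -> Prop) :=
  forall G : (T -> Prop) -> Prop, (forall W, G W -> op W) ->
    (forall x, S x -> exists W, G W /\ W x) ->
    exists n (f : nat -> T -> Prop), (forall k, (k < n)%N -> G (f k)) /\
      (forall x, S x -> exists k, (k < n)%N /\ f k x).

Definition trace {T} (S : T -> Prop) (W : T -> Prop) : {x | S x} -> Prop := fun z => W (proj1_sig z).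

Lemma cpt_sub {T} {op : topology T} {S} : compact_space (subspace op S) <-> cpt op S.
Proof.
split.
- move=> hc G hG hcov.
  pose F A := exists W, G W /\ A = trace S W.
  have [|z|n [f [hf hfc]]] := hc F.
  + by move=> A [W [GW ->]]; exists W; split; [exact: hG | move=> z; exact: iff_refl].
  + have [W [GW Wz]] := hcov _ (proj2_sig z); by exists (trace S W); split=> //; exists W.
  pose g k := epsilon (inhabits (fun _ : T => True)) (fun W => G W /\ f k = trace S W).
  have hg k : (k < n)%N -> G (g k) /\ f k = trace S (g k).
    move=> kn; have [W [GW e]] := hf k kn.
    by apply: (epsilon_spec (inhabits (fun _ : T => True)) (fun W => G W /\ f k = trace S W)); exists W.
  exists n, g; split; first by move=> k /hg [].
  move=> x Sx; have [k [kn fk]] := hfc (exist _ x Sx).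
  by exists k; split=> //; have [_ e] := hg k kn; rewrite e in fk.
- move=> hc F hF hcov.
  pose G W := op W /\ exists A, F A /\ forall z, A z <-> W (proj1_sig z).
  have [|x Sx|n [g [hg hgc]]] := hc G.
  + by move=> W [].
  + have [A [FA Az]] := hcov (exist _ x Sx).
    have [W [oW HW]] := hF A FA.
    by exists W; split; [split=> //; exists A | exact: (HW (exist _ x Sx)).1].
  pose f k := epsilon (inhabits (fun _ : {x | S x} => True)) (fun A => F A /\ forall z, A z <-> g k (proj1_sig z)).
  have hf k : (k < n)%N -> F (f k) /\ forall z, f k z <-> g k (proj1_sig z).
    move=> kn; have [_ [A HA]] := hg k kn.
    by apply: (epsilon_spec (inhabits (fun _ : {x | S x} => True)) (fun A => F A /\ forall z, A z <-> g k (proj1_sig z))); exists A.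
  exists n, f; split; first by move=> k /hf [].
  move=> z; have [k [kn gk]] := hgc _ (proj2_sig z).
  by exists k; split=> //; apply/(hf k kn).2.
Qed.

Lemma cpt_whole {T} {op : topology T} : compact_space op <-> cpt op (fun _ => True).
Proof.
split.
- move=> hc G hG hcov; have [n [f [h1 h2]]] := hc G hG (fun x => hcov x I).
  by exists n, f; split=> // x _; apply: h2.
- move=> hc G hG hcov; have [n [f [h1 h2]]] := hc G hG (fun x _ => hcov x).
  by exists n, f; split=> // x; apply: h2.
Qed.

Lemma cpt_ext {T} {op : topology T} {S S'} : cpt op S -> (forall x, S x <-> S' x) -> cpt op S'.
Proof. by move=> h /set_ext <-. Qed.

Lemma cpt_closed {T} {op : topology T} {S Cl} : cpt op S -> op (fun x => ~ Cl x) ->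
  cpt op (fun x => S x /\ Cl x).
Proof.
move=> hc hCl G hG hcov.
case: (classic (exists x, S x /\ Cl x)) => [[x0 hx0]|ne]; last first.
  by exists 0%N, (fun _ _ => True); split=> // x hx; case: ne; exists x.
have [W0 [GW0 _]] := hcov x0 hx0.
pose G' W := G W \/ W = (fun x => ~ Cl x).
have [|x Sx|n [f [hf hfc]]] := hc G'.
- by move=> W [/hG //|->].
- case: (classic (Cl x)) => Clx.
  + by have [W [GW Wx]] := hcov x (conj Sx Clx); exists W; split=> //; left.
  + by exists (fun x => ~ Cl x); split=> //; right.
pose g k := if excluded_middle_informative (G (f k)) then f k else W0.
exists n, g; split.
- by move=> k kn; rewrite /g; case: excluded_middle_informative.
- move=> x [Sx Clx]; have [k [kn fk]] := hfc x Sx.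
  exists k; split=> //; rewrite /g; case: excluded_middle_informative => // nG.
  by case: (hf k kn) => // e; rewrite e in fk.
Qed.

Lemma cpt_img {A B} {opA : topology A} {opB : topology B} {f : A -> B} {SA} :
  cpt opA SA -> (forall W, opB W -> opA (fun x => W (f x))) ->
  cpt opB (fun y => exists x, SA x /\ f x = y).
Proof.
move=> hc hf G hG hcov.
pose G' V := exists W, G W /\ V = (fun x => W (f x)).
have [|x Sx|n [g [hg hgc]]] := hc G'.
- by move=> V [W [GW ->]]; apply: hf; apply: hG.
- have [W [GW Wfx]] := hcov (f x) (ex_intro _ x (conj Sx erefl)).
  by exists (fun x => W (f x)); split=> //; exists W.
pose h k := epsilon (inhabits (fun _ : B => True)) (fun W => G W /\ g k = (fun x => W (f x))).
have hh k : (k < n)%N -> G (h k) /\ g k = (fun x => h k (f x)).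
  move=> kn; have [W HW] := hg k kn.
  by apply: (epsilon_spec (inhabits (fun _ : B => True)) (fun W => G W /\ g k = (fun x => W (f x)))); exists W.
exists n, h; split; first by move=> k /hh [].
move=> y [x [Sx <-]]; have [k [kn gk]] := hgc x Sx.
by exists k; split=> //; have [_ e] := hh k kn; rewrite e in gk.
Qed.

Lemma fin_pos (n : nat) (P : nat -> R -> Prop) :
  (forall k r r', (0 < r')%R -> (r' <= r)%R -> P k r -> P k r') ->
  (forall k, (k < n)%N -> exists r, (0 < r)%R /\ P k r) ->
  exists rho, (0 < rho)%R /\ forall k, (k < n)%N -> P k rho.
Proof.
move=> mono; elim: n => [|n IH] h.
  by exists 1%R; split=> [|k]; [lra | rewrite ltn0].
have [rho [r0 Hr]] := IH (fun k kn => h k (ltnW kn)).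
have [r [r1 Pr]] := h n (ltnSn n).
exists (Rmin rho r); split; first by apply: Rmin_glb_lt.
move=> k; rewrite ltnS leq_eqVlt; case/orP => [/eqP ->|kn].
- apply: (mono n r); [by apply: Rmin_glb_lt | exact: Rmin_r | done].
- apply: (mono k rho); [by apply: Rmin_glb_lt | exact: Rmin_l | exact: Hr].
Qed.

Lemma sep_closed {T} {d : T -> T -> R} (hd : is_metric d) {op : topology T}
  (hop : forall V, op V <-> mopen d V) (Rel : T -> T -> Prop) (S : T -> Prop) :
  cpt op S ->
  (forall c b, S c -> ~ Rel c b -> exists r, (0 < r)%R /\
      forall c' b', (d c c' < r)%R -> (d b b' < r)%R -> ~ Rel c' b') ->
  op (fun b => ~ exists c, S c /\ Rel c b).
Proof.
move=> hc hsep; apply/hop => b hb.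
pose G W := exists c r, S c /\ (0 < r)%R /\
   (forall c' b', (d c c' < r)%R -> (d b b' < r)%R -> ~ Rel c' b') /\ W = (fun z => (d c z < r)%R).
have [|c Sc|n [f [hf hfc]]] := hc G.
- by move=> W [c [r [_ [_ [_ ->]]]]]; apply/hop; apply: ball_open.
- have [r [r0 Hr]] := hsep c b Sc (fun h => hb (ex_intro _ c (conj Sc h))).
  exists (fun z => (d c z < r)%R); split; first by exists c, r.
  by rewrite md0.
pose P k rho := forall c' b', f k c' -> (d b b' < rho)%R -> ~ Rel c' b'.
have [|k kn|rho [rho0 Hrho]] := fin_pos n P.
- move=> k r r' _ le h c' b' fc db; apply: (h c' b' fc); lra.
- have [c [r [_ [r0 [Hr e]]]]] := hf k kn.
  exists r; split=> // c' b'; rewrite e => /= dc db; exact: Hr.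
exists rho; split=> // b' db [c [Sc Rcb]].
have [k [kn fk]] := hfc c Sc.
exact: (Hrho k kn c b' fk db Rcb).
Qed.

Lemma qproj_eq {T} (Rl : T -> T -> Prop) (eqv : equivalence T Rl) a b :
  qproj Rl a = qproj Rl b <-> Rl a b.
Proof.
case: eqv => refl trans sym; split.
- move=> e; have e' : Rl a = Rl b by have := f_equal (@proj1_sig _ _) e.
  by rewrite e'; apply: refl.
- move=> hab; apply: sig_eq => /=; apply: set_ext => c; split.
  + by move=> hac; apply: (trans _ a) => //; apply: sym.
  + by move=> hbc; apply: (trans _ b).
Qed.

Section ObjM.
Context {X : Type} {opX : topology X} {K : atlas X}.
Context (hK : tame_top_atlas opX K).
Context (hXmet : metrizable opX).

Definition OF (I0 : IKtype K) := cU (aK K (proj1_sig I0)).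

Definition dI (I : IKtype K) := mchoose (topU (aK K (proj1_sig I))).

Lemma dI_spec I : is_metric (dI I) /\ forall V, topU (aK K (proj1_sig I)) V <-> mopen (dI I) V.
Proof. exact: mchoose_spec (ch_metU hK (proj2_sig I)). Qed.

Definition dO (a b : Obj K) : R :=
  match excluded_middle_informative (projT1 a = projT1 b) with
  | left e => Rmin 1 (dI (projT1 b) (eq_rect _ OF (projT2 a) _ e) (projT2 b))
  | right _ => 1%R end.

Lemma dO_same I (x y : OF I) : dO (existT OF I x) (existT OF I y) = Rmin 1 (dI I x y).
Proof.
rewrite /dO /=; case: excluded_middle_informative => // e.
by rewrite (proof_irrelevance _ e erefl).
Qed.

Lemma dO_diff {I J} {x : OF I} {y : OF J} : I <> J -> dO (existT OF I x) (existT OF J y) = 1%R.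
Proof. by move=> ne; rewrite /dO /=; case: excluded_middle_informative. Qed.

Lemma Rmin1_tri a b c : (0 <= b)%R -> (0 <= c)%R -> (a <= b + c)%R -> (Rmin 1 a <= Rmin 1 b + Rmin 1 c)%R.
Proof. move=> *; unfold Rmin; repeat destruct Rle_dec; lra. Qed.

Lemma Rmin1_ge0 a : (0 <= a)%R -> (0 <= Rmin 1 a)%R.
Proof. move=> *; unfold Rmin; repeat destruct Rle_dec; lra. Qed.

Lemma Rmin1_le1 a : (Rmin 1 a <= 1)%R.
Proof. unfold Rmin; repeat destruct Rle_dec; lra. Qed.

Lemma Rmin1_lt a r : (r <= 1)%R -> (Rmin 1 a < r)%R -> (a < r)%R.
Proof. move=> *; unfold Rmin in *; repeat destruct Rle_dec; lra. Qed.

Lemma dO_ge0 a b : (0 <= dO a b)%R.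
Proof.
case: a => I x; case: b => J y; case: (classic (I = J)) => [e|ne].
+ subst J; rewrite dO_same; apply: Rmin1_ge0; exact: mdge0 (dI_spec I).1 _ _.
+ rewrite dO_diff //; lra.
Qed.

Lemma dO_metric : is_metric dO.
Proof.
split; [exact: dO_ge0|split; [|split]].
- case=> I x [J y]; split.
  + case: (classic (I = J)) => [e|ne]; last by rewrite dO_diff //; lra.
    subst J; rewrite dO_same; unfold Rmin; destruct Rle_dec; first lra.
    by move/(mdeq (dI_spec I).1) ->.
  + move=> e; have eIJ : I = J := f_equal (@projT1 _ _) e.
    subst J; have := Eqdep.EqdepTheory.inj_pair2 _ _ _ _ _ e => ->.
    rewrite dO_same (md0 (dI_spec I).1); unfold Rmin; destruct Rle_dec; lra.
- case=> I x [J y]; case: (classic (I = J)) => [e|ne].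
  + by subst J; rewrite !dO_same (mdsym (dI_spec I).1).
  + by rewrite !dO_diff //; move=> e; apply: ne.
- case=> I x [J y] [L z].
  case: (classic (I = L)) => [eIL|nIL]; last first.
    rewrite (dO_diff nIL).
    case: (classic (I = J)) => [eIJ|nIJ].
    + subst J; rewrite (dO_diff nIL); have := dO_ge0 (existT _ I x) (existT _ I y); lra.
    + rewrite (dO_diff nIJ); have := dO_ge0 (existT _ J y) (existT _ L z); lra.
  subst L; rewrite dO_same.
  case: (classic (I = J)) => [eIJ|nIJ]; last first.
    rewrite (dO_diff nIJ); have := Rmin1_le1 (dI I x z); have := dO_ge0 (existT _ J y) (existT _ I z).
    lra.
  subst J; rewrite !dO_same; have hm := (dI_spec I).1.
  apply: Rmin1_tri; [exact: (mdge0 hm x y) | exact: (mdge0 hm y z) | exact: (mdtri hm x y z)].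
Qed.

Lemma dO_lt1 a b : (dO a b < 1)%R -> projT1 a = projT1 b.
Proof.
case: a => I x; case: b => J y /=; case: (classic (I = J)) => // ne.
by rewrite dO_diff //; lra.
Qed.

Lemma dO_top V : topObj K V <-> mopen dO V.
Proof.
split.
- move=> hV [I x] Vx.
  have [_ ho] := dI_spec I.
  have [e [e0 He]] := (ho _).1 (hV I) x Vx.
  exists (Rmin e 1); split; first by apply: Rmin_glb_lt; lra.
  case=> J y hd.
  have hd1 : (dO (existT _ I x) (existT _ J y) < 1)%R by have := Rmin_r e 1; lra.
  have eIJ := dO_lt1 _ _ hd1; simpl in eIJ; subst J.
  rewrite dO_same in hd; apply: He.
  have := Rmin_l e 1; have := Rmin1_lt (dI I x y) (Rmin e 1) (Rmin_r e 1) hd; lra.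
- move=> hV I; have [_ ho] := dI_spec I; apply/ho => x Vx.
  have [e [e0 He]] := hV _ Vx.
  exists e; split=> // y hy; apply: He; rewrite dO_same.
  have := Rmin_r 1 (dI I x y); lra.
Qed.

End ObjM.

Section KC.
Context {X : Type} {opX : topology X} {K : atlas X}.
Context (hK : tame_top_atlas opX K).
Context (hXmet : metrizable opX).

Lemma simK_equiv : equivalence (Obj K) (simK K).
Proof. exact: clos_rst_is_equiv. Qed.

Lemma piK_eq a b : piK K a = piK K b <-> simK K a b.
Proof. exact: (qproj_eq (simK K) simK_equiv a b). Qed.

Lemma near_same (I : IKtype K) (x : OF I) (c' : Obj K) r : (r <= 1)%R ->
  (dO (existT _ I x) c' < r)%R -> exists x' : OF I, c' = existT _ I x' /\ (dI I x x' < r)%R.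
Proof.
case: c' => J y r1 hd.
have e := dO_lt1 _ _ (Rlt_le_trans _ _ _ hd r1); simpl in e; subst J.
exists y; split=> //; rewrite dO_same in hd.
exact: (Rmin1_lt _ _ r1 hd).
Qed.

Lemma inv_pos n : (0 < / INR n.+1)%R.
Proof. apply: Rinv_0_lt_compat; apply: lt_0_INR; apply/ltP. done. Qed.
Lemma inv_le1 n : (/ INR n.+1 <= 1)%R.
Proof.
rewrite -Rinv_1; apply: Rinv_le_contravar; first lra.
rewrite -/(INR 1); apply: le_INR; apply/leP; done.
Qed.

Lemma loc_sep c b : ~ simK K c b -> exists r, (0 < r)%R /\
   forall c' b', (dO c c' < r)%R -> (dO b b' < r)%R -> ~ simK K c' b'.
Proof.
case: c => [[I hI] x]; case: b => [[J hJ] y] ncb; apply: NNPP => H.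
have ex n : exists p : cU (aK K I) * cU (aK K J),
   (dI (exist _ I hI) x p.1 < / INR n.+1)%R /\ (dI (exist _ J hJ) y p.2 < / INR n.+1)%R /\
   simK K (mkO hI p.1) (mkO hJ p.2).
  apply: NNPP => nH; apply: H; exists (/ INR n.+1)%R; split; first exact: inv_pos.
  move=> c' b' dc db hcb; apply: nH.
  have [x' [e1 d1]] := near_same _ x c' _ (inv_le1 n) dc.
  have [y' [e2 d2]] := near_same _ y b' _ (inv_le1 n) db.
  by exists (x', y'); split=> //; split=> //; rewrite e1 e2 in hcb.
pose ps n := proj1_sig (constructive_indefinite_description _ (ex n)).
have hps n := proj2_sig (constructive_indefinite_description _ (ex n)).
have cx : conv_top (topU (aK K I)) (fun n => (ps n).1) x.
  have [hm ho] := dI_spec hK (exist _ I hI).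
  simpl in ho; apply: (conv_ball ho) => n; exact: (hps n).1.
have cy : conv_top (topU (aK K J)) (fun n => (ps n).2) y.
  have [hm ho] := dI_spec hK (exist _ J hJ).
  simpl in ho; apply: (conv_ball ho) => n; exact: (hps n).2.1.
apply: ncb; refine (CG hK hXmet hI hJ _ _ _ _ cx cy _) => n.
apply: (simK_R hK); exact: (hps n).2.2.
Qed.

Theorem KC S : cpt (topObj K) S -> topObj K (fun b => ~ exists c, S c /\ simK K c b).
Proof.
move=> hc; apply: (sep_closed (dO_metric hK) (dO_top hK) (simK K) S hc).
move=> c b _ ncb; exact: loc_sep ncb.
Qed.

Lemma piset_iff S a : piset S (piK K a) <-> exists c, S c /\ simK K c a.
Proof.
split; move=> [c [Sc e]]; exists c; split=> //; first by apply/piK_eq.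
by apply/piK_eq.
Qed.

Theorem KC_closed S : cpt (topObj K) S -> tclosed (topVirt K) (piset S).
Proof.
move=> /KC h; rewrite /tclosed /topVirt /quotient_top.
rewrite (set_ext (fun a => ~ piset S (qproj (simK K) a)) (fun b => ~ exists c, S c /\ simK K c b)) //.
by move=> a; rewrite -/(piK K a) piset_iff.
Qed.

Theorem obj_cpt_closed S : cpt (topObj K) S -> topObj K (fun b => ~ S b).
Proof.
move=> hc; have := sep_closed (dO_metric hK) (dO_top hK) eq S hc.
have hm := dO_metric hK.
rewrite (set_ext (fun b => ~ exists c, S c /\ c = b) (fun b => ~ S b)).
- apply=> c b _ ncb; exists (dO c b / 2)%R.
  have d0 : (0 < dO c b)%R.
    have := mdge0 hm c b; case/Rle_lt_or_eq_dec => // /esym /(mdeq hm) //.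
  split; first lra.
  move=> c' b' h1 h2 e; subst b'.
  have := mdtri hm c c' b; have := mdsym hm b c'; lra.
- move=> b /=; split=> h1 h2; apply: h1; [by exists b | by case: h2 => c [Sc <-]].
Qed.

End KC.

Lemma top_ext {T} (op op' : topology T) : (forall W, op W <-> op' W) -> op = op'.
Proof. move=> h; apply: functional_extensionality => W; apply: propositional_extensionality; exact: h. Qed.

Lemma open_nn {T} (op : topology T) V : op V -> op (fun x => ~ ~ V x).
Proof. move=> h; have -> : (fun x => ~ ~ V x) = V by apply: set_ext => x; split; [apply: NNPP | tauto]. done. Qed.

Lemma sub_closure {T} {op : topology T} {V S} : (forall x, S x -> V x) ->
  forall y : {x | V x}, tclosure (subspace op V) (fun z => S (proj1_sig z)) y <-> tclosure op S (proj1_sig y).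
Proof.
move=> SV y; split.
- move=> h Cl hCl SCl; apply: (h (fun z => Cl (proj1_sig z))).
  + by exists (fun x => ~ Cl x); split=> // z.
  + by move=> z; apply: SCl.
- move=> h0 Cl' [W [hW HW]] SCl'.
  have hcl : tclosed op (fun x => ~ W x) by apply: open_nn.
  have := h0 _ hcl (fun x Sx => fun Wx => (HW (exist _ x (SV x Sx))).2 Wx (SCl' (exist _ x (SV x Sx)) Sx)).
  by move=> nW; apply: NNPP => nC; apply: nW; apply/(HW y).
Qed.

Lemma cpt_sub_true {T} {op : topology T} {S} : cpt op S -> cpt (subspace op S) (fun _ => True).
Proof. by move/cpt_sub/cpt_whole. Qed.

Section Main.
Context {X : Type} {opX : topology X} {K : atlas X}.
Context (hK : tame_top_atlas opX K).
Context (hXmet : metrizable opX).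

Lemma part_i (A : Obj K -> Prop) W : normtop A W -> bartop A W.
Proof. by move=> [W0 [hW0 HW]]; exists (fun a => W0 (piK K a)); split. Qed.

Lemma piA_surj {C : Obj K -> Prop} (y : {p | piset C p}) : exists z, piA C z = y.
Proof.
case: y => p hp; have [c [Cc e]] := hp.
by exists (exist _ c Cc); apply: sig_eq.
Qed.

Lemma bar_cpt {C} : cpt (topObj K) C -> compact_space (bartop C).
Proof.
move=> hc; apply/cpt_whole.
have := cpt_img (f := piA C) (cpt_sub_true hc) (fun W hW => hW).
move/cpt_ext; apply=> y; split=> // _.
by have [z e] := piA_surj y; exists z.
Qed.

Lemma bar_norm {C} : cpt (topObj K) C -> forall W, bartop C W <-> normtop C W.
Proof.
move=> hc W; split; last exact: part_i.
move=> [V [hV HV]].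
pose S' a := C a /\ ~ V a.
have hS' : cpt (topObj K) S' := cpt_closed hc (open_nn _ _ hV).
have hcl := KC_closed hK hXmet _ hS'.
exists (fun p => ~ piset S' p); split=> // [[p hp]] /=.
have [c [Cc e]] := hp.
have ey : piA C (exist _ c Cc) = exist _ p hp by apply: sig_eq.
split.
- move=> Wy [c' [[Cc' nV] e']].
  apply: nV; apply/(HV (exist _ c' Cc')).
  have -> : piA C (exist _ c' Cc') = exist _ p hp by apply: sig_eq.
  done.
- move=> nS; rewrite -ey; apply/(HV (exist _ c Cc)) => /=.
  by apply: NNPP => nV; apply: nS; exists c.
Qed.

Lemma part_ii A : relcomp (topObj K) A ->
     compact_space (bartop (tclosure (topObj K) A)) /\
     compact_space (normtop (tclosure (topObj K) A)) /\
     (forall W, bartop (tclosure (topObj K) A) W <->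
                normtop (tclosure (topObj K) A) W).
Proof.
move=> /cpt_sub hc.
have hb := bar_cpt hc.
have hn := bar_norm hc.
split=> //; split=> //.
by rewrite -(top_ext _ _ hn).
Qed.

Lemma nested_cpt {T} {op : topology T} {V} {Sc : {x | V x} -> Prop} :
  compact_space (subspace (subspace op V) Sc) -> cpt op (fun a => exists h : V a, Sc (exist _ a h)).
Proof.
move=> /cpt_sub hc.
have := cpt_img (f := @proj1_sig _ V) hc (fun W hW => ex_intro _ W (conj hW (fun z => iff_refl _))).
move/cpt_ext; apply=> a; split.
- by move=> [[a' h] [Sz /= <-]]; exists h.
- by move=> [h Sz]; exists (exist _ a h).
Qed.

Lemma part_iii A A' : (forall a, A a -> A' a) ->
  relcomp_in (topObj K) A A' ->
  (forall p, piset (tclosure (topObj K) A) p <-> tclosure (topVirt K) (piset A) p) /\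
  relcomp_in (topVirt K) (piset A) (piset A').
Proof.
move=> AA' hrel.
pose Sc := tclosure (subspace (topObj K) A') (fun y => A (proj1_sig y)).
pose D a := exists h : A' a, Sc (exist _ a h).
have hD : cpt (topObj K) D := nested_cpt hrel.
have clD a : tclosure (topObj K) A a <-> D a.
  split.
  - move=> h; apply: h; first exact: (obj_cpt_closed hK _ hD).
    move=> x Ax; exists (AA' x Ax) => Cl _ HCl; exact: (HCl (exist _ x (AA' x Ax)) Ax).
  - move=> [h hS] Cl hCl ACl.
    apply: (hS (fun z => Cl (proj1_sig z))).
    + by exists (fun x => ~ Cl x); split=> // z.
    + by move=> z; apply: ACl.
have hcl : cpt (topObj K) (tclosure (topObj K) A) by apply: (cpt_ext hD) => b; exact: (iff_sym (clD b)).
have e3 p : piset (tclosure (topObj K) A) p <-> tclosure (topVirt K) (piset A) p.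
  split.
  - move=> [a [ha <-]] Cl hCl ACl.
    apply: (ha (fun a => Cl (piK K a))); first exact: hCl.
    by move=> x Ax; apply: ACl; exists x.
  - move=> h; apply: h; first exact: (KC_closed hK hXmet _ hcl).
    move=> q [a [Aa <-]]; exists a; split=> //.
    by move=> Cl _ ACl; exact: (ACl a Aa).
split=> //.
apply/cpt_sub.
have SV : forall p, piset A p -> piset A' p by move=> p [a [Aa e]]; exists a; split=> //; apply: AA'.
pose f (z : {a | D a}) : {p | piset A' p} :=
  exist _ (piK K (proj1_sig z)) (ex_intro _ (proj1_sig z)
     (conj (let: ex_intro h _ := proj2_sig z in h) erefl)).
have := cpt_img (opB := subspace (topVirt K) (piset A')) (f := f) (cpt_sub_true hD).
move=> H; have := H (ltac:(move=> W [W0 [hW0 HW]]; exists (fun a => W0 (piK K a)); split=> // z; exact: HW)).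
move/cpt_ext; apply=> y; rewrite (sub_closure SV y); split.
- move=> [[a hDa] [_ <-]] /=; apply/e3; exists a; split=> //; exact/clD.
- move/e3 => [a [ha ea]]; exists (exist _ a ((clD a).1 ha)); split=> //.
  by apply: sig_eq.
Qed.

End Main.

Definition subs {T} (A B : T -> Prop) := forall x, A x -> B x.

Definition shrink_prop {T} (tau : topology T) := forall F G : T -> Prop,
  tau (fun x => ~ F x) -> tau G -> subs F G ->
  exists V F', tau V /\ tau (fun x => ~ F' x) /\ subs F V /\ subs V F' /\ subs F' G.

Lemma floor_ex (x : R) : (0 <= x)%R -> exists j : nat, (INR j <= x < INR j + 1)%R.
Proof.
move=> x0; have [m hm] := INR_unbounded x.
elim: m hm => [|m IH] hm; first by simpl in hm; lra.
case: (Rlt_or_le x (INR m)) => h; first exact: IH.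
by exists m; rewrite S_INR in hm; lra.
Qed.

Lemma pow2_pos n : (0 < INR (expn 2 n))%R.
Proof. apply: lt_0_INR; apply/ltP; exact: expn_gt0. Qed.

Lemma INR_mul a b : INR (a * b)%N = (INR a * INR b)%R.
Proof. by rewrite -mult_INR. Qed.

Definition dy (n k : nat) : R := (INR k / INR (expn 2 n))%R.

Lemma dy_ge0 n k : (0 <= dy n k)%R.
Proof. have := pos_INR k; have := pow2_pos n; rewrite /dy => *; apply: Rmult_le_pos; [lra | apply: Rlt_le; apply: Rinv_0_lt_compat; lra]. Qed.

Lemma dy_le1 n k : k <= expn 2 n -> (dy n k <= 1)%R.
Proof.
move=> hk; have := pow2_pos n => p; rewrite /dy.
have : (INR k <= INR (expn 2 n))%R by apply: le_INR; apply/leP.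
move=> h; apply: (Rmult_le_reg_r (INR (expn 2 n))) => //.
rewrite /Rdiv Rmult_assoc Rinv_l; lra.
Qed.

Lemma dy_lt {n a n' c} : (dy n a < dy n' c)%R -> a * expn 2 n' < c * expn 2 n.
Proof.
rewrite /dy => h; apply/ltP; apply: INR_lt; rewrite !INR_mul.
have p := pow2_pos n; have p' := pow2_pos n'.
have e1 : (INR a * INR (expn 2 n') = (INR a / INR (expn 2 n)) * (INR (expn 2 n) * INR (expn 2 n')))%R by field; lra.
have e2 : (INR c * INR (expn 2 n) = (INR c / INR (expn 2 n')) * (INR (expn 2 n) * INR (expn 2 n')))%R by field; lra.
rewrite e1 e2; apply: Rmult_lt_compat_r => //; exact: Rmult_lt_0_compat.
Qed.

Lemma dyS n j : dy n j.+1 = (dy n j + / INR (expn 2 n))%R.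
Proof. have p := pow2_pos n; rewrite /dy S_INR; field; lra. Qed.

Section Urysohn.
Context {T : Type} {tau : topology T} (hsh : shrink_prop tau).
Context (F0 G1 : T -> Prop) (hF0 : tau (fun x => ~ F0 x)) (hG1 : tau G1) (hFG : subs F0 G1).

Definition goodp (P : (T -> Prop) * (T -> Prop)) :=
  tau P.1 /\ tau (fun x => ~ P.2 x) /\ subs P.1 P.2.

Definition shspec (F G : T -> Prop) (P : (T -> Prop) * (T -> Prop)) :=
  goodp P /\ subs F P.1 /\ subs P.2 G.

Definition sh (F G : T -> Prop) :=
  epsilon (inhabits ((fun _ : T => True), (fun _ : T => True))) (shspec F G).

Lemma sh_spec F G : tau (fun x => ~ F x) -> tau G -> subs F G -> shspec F G (sh F G).
Proof.
move=> hF hG hFG'; apply: epsilon_spec.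
have [V [F' [h1 [h2 [h3 [h4 h5]]]]]] := hsh F G hF hG hFG'.
by exists (V, F').
Qed.

Definition P0 := sh F0 G1.
Definition P1 := sh P0.2 G1.

Lemma P0_spec : shspec F0 G1 P0.
Proof. exact: sh_spec. Qed.

Lemma P1_spec : shspec P0.2 G1 P1.
Proof.
have [[_ [h2 _]] [_ h3]] := P0_spec.
exact: sh_spec.
Qed.

Fixpoint lvl (n k : nat) : (T -> Prop) * (T -> Prop) :=
  match n with
  | 0 => if k == 0 then P0 else P1
  | n'.+1 => if odd k then sh (lvl n' k./2).2 (lvl n' (k./2).+1).1 else lvl n' k./2
  end.

Lemma lvl_even n j : lvl n.+1 j.*2 = lvl n j.
Proof. by rewrite /= odd_double doubleK. Qed.

Lemma lvl_odd n j : lvl n.+1 (j.*2).+1 = sh (lvl n j).2 (lvl n j.+1).1.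
Proof. by rewrite /= odd_double /= uphalf_double. Qed.

Lemma par_cases k : (exists j, k = j.*2) \/ (exists j, k = (j.*2).+1).
Proof.
have := odd_double_half k; case: (odd k) => /= e.
- by right; exists k./2; exact: (esym e).
- by left; exists k./2; exact: (esym e).
Qed.

Lemma exp2S n : expn 2 n.+1 = (expn 2 n).*2.
Proof. by rewrite expnS mul2n. Qed.

Lemma lvl_inv n : (forall k, k <= expn 2 n -> goodp (lvl n k)) /\
  (forall k, k < expn 2 n -> subs (lvl n k).2 (lvl n k.+1).1).
Proof.
elim: n => [|n [IH1 IH2]].
- rewrite expn0; split.
  + move=> k; rewrite leq_eqVlt ltnS leqn0; case/orP=> /eqP ->; first by have [] := P1_spec.
    by have [] := P0_spec.
  + move=> k; rewrite ltnS leqn0 => /eqP -> /=.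
    by have [_ []] := P1_spec.
- have hsp j : j < expn 2 n -> shspec (lvl n j).2 (lvl n j.+1).1 (sh (lvl n j).2 (lvl n j.+1).1).
    move=> jn; have [_ [h2 _]] := IH1 j (ltnW jn); have [h1 _] := IH1 j.+1 jn.
    exact: (sh_spec _ _ h2 h1 (IH2 j jn)).
  rewrite exp2S; split.
  + move=> k; case: (par_cases k) => [[j ->]|[j ->]].
    * by rewrite lvl_even leq_double => /IH1.
    * rewrite lvl_odd => hk.
      have jn : j < expn 2 n by rewrite -ltn_double; apply: leq_ltn_trans hk.
      by have [] := hsp j jn.
  + move=> k; case: (par_cases k) => [[j ->]|[j ->]] hk.
    * rewrite lvl_odd lvl_even.
      have jn : j < expn 2 n by rewrite -ltn_double; apply: leq_ltn_trans hk.
      by have [_ []] := hsp j jn.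
    * rewrite (_ : (j.*2).+2 = (j.+1).*2) // lvl_even lvl_odd.
      have jn : j < expn 2 n by rewrite -ltn_double; apply: ltn_trans hk.
      by have [_ []] := hsp j jn.
Qed.

Lemma lvl0 n : lvl n 0 = P0.
Proof. elim: n => [//|n IH]; by rewrite -[0]/(0.*2) lvl_even. Qed.

Lemma lvlM n : lvl n (expn 2 n) = P1.
Proof. elim: n => [//|n IH]; by rewrite exp2S lvl_even. Qed.

Lemma compat n m k : lvl (n + m) (k * expn 2 m) = lvl n k.
Proof.
elim: m => [|m IH]; first by rewrite addn0 expn0 muln1.
by rewrite addnS exp2S -mul2n mulnCA mul2n lvl_even.
Qed.

Lemma mono {n k k'} : k < k' -> k' <= expn 2 n -> subs (lvl n k).2 (lvl n k').1.
Proof.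
move=> kk'; elim: k' kk' => [//|k' IH]; rewrite ltnS leq_eqVlt => /orP [/eqP <-|kk'] hk'.
- exact: (lvl_inv n).2.
- move=> x /(IH kk' (ltnW hk')) h.
  have [_ [_ h3]] := (lvl_inv n).1 k' (ltnW hk').
  exact: ((lvl_inv n).2 k' hk' x (h3 x h)).
Qed.

Lemma cross {n a n' c} : a <= expn 2 n -> c <= expn 2 n' ->
  a * expn 2 n' < c * expn 2 n -> subs (lvl n a).2 (lvl n' c).1.
Proof.
move=> ha hc hlt.
rewrite -(compat n n' a) -(compat n' n c) (addnC n' n).
apply: mono => //.
by rewrite expnD mulnC leq_mul2l hc orbT.
Qed.

Lemma good_all {n k} : k <= expn 2 n -> goodp (lvl n k).
Proof. exact: (lvl_inv n).1. Qed.

Lemma O_sub_G {n k} : k <= expn 2 n -> subs (lvl n k).1 G1.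
Proof.
move=> hk x hx.
have [[_ [_ hP1]] [_ hG]] := P1_spec.
have [_ [_ hOC]] := good_all hk.
have hc := hOC x hx.
apply: hG.
move: hk hc; rewrite leq_eqVlt => /orP [/eqP ek|lk] hc.
- by move: hc; rewrite ek lvlM.
- by apply: hP1; rewrite -(lvlM n); apply: (mono lk (leqnn _)).
Qed.

Lemma F0_sub n : subs F0 (lvl n 0).1.
Proof. by rewrite lvl0; have [_ [h _]] := P0_spec. Qed.


Definition Dset (y : T) (r : R) := r = 1%R \/ exists n k, k <= expn 2 n /\ (lvl n k).1 y /\ r = dy n k.
Definition Eset (y : T) (r : R) := Dset y (- r)%R.

Lemma Dset_ge0 y r : Dset y r -> (0 <= r)%R.
Proof. case=> [->|[n [k [_ [_ ->]]]]]; [lra | exact: dy_ge0]. Qed.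

Lemma E_bound y : bound (Eset y).
Proof. by exists 0%R => r /Dset_ge0; lra. Qed.

Lemma E_ne y : exists r, Eset y r.
Proof. by exists (-1)%R; left; lra. Qed.

Definition u (y : T) : R := (- proj1_sig (completeness (Eset y) (E_bound y) (E_ne y)))%R.

Lemma u_le y r : Dset y r -> (u y <= r)%R.
Proof.
rewrite /u; case: completeness => m [ub _] /= h.
have := ub (- r)%R (ltac:(by rewrite /Eset Ropp_involutive)); lra.
Qed.

Lemma u_ge y b : (forall r, Dset y r -> (b <= r)%R) -> (b <= u y)%R.
Proof.
rewrite /u; case: completeness => m [_ lub] /= H.
have : (m <= - b)%R by apply: lub => r h; have := H (- r)%R h; lra.
lra.
Qed.

Lemma u_01 y : (0 <= u y <= 1)%R.
Proof. split; [apply: u_ge => r /Dset_ge0 // | apply: u_le; by left]. Qed.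

Lemma u_F0 y : F0 y -> u y = 0%R.
Proof.
move=> hy; apply: Rle_antisym; last exact: (u_01 y).1.
have : dy 0 0 = 0%R by rewrite /dy /=; lra.
move=> <-; apply: u_le; right; exists 0, 0; split=> //; split=> //; exact: F0_sub.
Qed.

Lemma u_G1 y : ~ G1 y -> u y = 1%R.
Proof.
move=> hy; apply: Rle_antisym; first exact: (u_01 y).2.
apply: u_ge => r [->|[n [k [hk [hO _]]]]]; first lra.
by case: hy; apply: (O_sub_G hk).
Qed.

Lemma u_O {y n k} : k <= expn 2 n -> (lvl n k).1 y -> (u y <= dy n k)%R.
Proof. by move=> hk hO; apply: u_le; right; exists n, k. Qed.

Lemma u_lt {y n k} : k <= expn 2 n -> (u y < dy n k)%R -> (lvl n k).1 y.
Proof.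
move=> hk hlt; apply: NNPP => nO.
suff : (dy n k <= u y)%R by lra.
apply: u_ge => r [->|[n' [k' [hk' [hO ->]]]]]; first exact: dy_le1.
apply: Rnot_lt_le => hl; apply: nO.
apply: (cross hk' hk (dy_lt hl) y).
by have [_ [_ h]] := good_all hk'; apply: (h y).
Qed.

Lemma u_notC {y n k} : k <= expn 2 n -> ~ (lvl n k).2 y -> (dy n k <= u y)%R.
Proof.
move=> hk nC; apply: u_ge => r [->|[n' [k' [hk' [hO ->]]]]]; first exact: dy_le1.
apply: Rnot_lt_le => hl; apply: nC.
have h1 := cross hk' hk (dy_lt hl).
have [_ [_ h2]] := good_all hk'.
have [_ [_ h3]] := good_all hk.
exact: (h3 y (h1 y (h2 y hO))).
Qed.

Lemma u_C {y n k} : k < expn 2 n -> (lvl n k).2 y -> (u y <= dy n k.+1)%R.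
Proof. by move=> hk hC; apply: u_O => //; exact: ((lvl_inv n).2 k hk y hC). Qed.

Context (htop : is_topology tau).

Lemma tau_I A B : tau A -> tau B -> tau (fun x => A x /\ B x).
Proof. by case: htop => _ [h _]; apply: h. Qed.
Lemma tau_T : tau (fun _ => True).
Proof. by case: htop. Qed.

Lemma u_cont y eps : (0 < eps)%R ->
  exists O, tau O /\ O y /\ forall z, O z -> (Rabs (u z - u y) < eps)%R.
Proof.
move=> e0.
have [N [hN N0]] := archimed_cor1 (eps / 4) (ltac:(lra)).
set n := N.
have hM : (/ INR (expn 2 n) < eps / 4)%R.
  apply: Rle_lt_trans hN; apply: Rinv_le_contravar; first by apply: lt_0_INR.
  apply: le_INR; apply/leP; exact: ltnW (ltn_expl N (ltnSn 1)).
set h := (/ INR (expn 2 n))%R in hM.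
have hpos : (0 < h)%R by apply: Rinv_0_lt_compat; apply: pow2_pos.
set t := u y.
have [t0 t1] : (0 <= t <= 1)%R := u_01 y.
have [j [hj1 hj2]] := floor_ex (t * INR (expn 2 n)) (ltac:(have := pow2_pos n; nra)).
have p := pow2_pos n.
have dj : (dy n j <= t)%R.
  rewrite /dy; apply: (Rmult_le_reg_r (INR (expn 2 n))) => //.
  rewrite /Rdiv Rmult_assoc Rinv_l; lra.
have dj1 : (t < dy n j.+1)%R.
  rewrite /dy S_INR; apply: (Rmult_lt_reg_r (INR (expn 2 n))) => //.
  rewrite /Rdiv Rmult_assoc Rinv_l; lra.
rewrite dyS -/h in dj1.
have hU2 : exists U2, tau U2 /\ U2 y /\ forall z, U2 z -> (t - 3 * h < u z)%R.
  case: j hj1 hj2 dj dj1 => [|[|i]] hj1 hj2 dj dj1.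
  + exists (fun _ => True); split; first exact: tau_T; split=> // z _.
    have := (u_01 z).1; rewrite /dy /= in dj1; lra.
  + exists (fun _ => True); split; first exact: tau_T; split=> // z _.
    have := (u_01 z).1; rewrite (dyS n 0) -/h in dj1.
    have : dy n 0 = 0%R by rewrite /dy /= /Rdiv Rmult_0_l.
    lra.
  + have hi : i < expn 2 n.
      have : (INR i.+2 <= INR (expn 2 n))%R.
        have := (u_01 y).2; rewrite -/t => t1'.
        apply: (Rle_trans _ (t * INR (expn 2 n))) => //; nra.
      move/INR_le/leP => hl; exact: ltn_trans (ltnSn i) hl.
    exists (fun z => ~ (lvl n i).2 z); split; first by have [_ [g _]] := good_all (ltnW hi).
    split.
    * move=> hC; have := u_C hi hC; rewrite -/t.
      have : (dy n i.+1 < dy n i.+2)%R by rewrite (dyS n i.+1) -/h; lra.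
      lra.
    * move=> z hz; have := u_notC (ltnW hi) hz.
      rewrite (dyS n i.+1) (dyS n i) -/h in dj dj1; lra.
pose U1 := if j.+1 <= expn 2 n then (lvl n j.+1).1 else (fun _ : T => True).
have hU1 : tau U1 /\ U1 y /\ forall z, U1 z -> (u z <= t + h)%R.
  rewrite /U1; case: ifP => hj.
  + have [g1 _] := good_all hj; split=> //; split.
    * by apply: (u_lt hj); rewrite dyS -/h.
    * by move=> z hz; have := u_O hj hz; rewrite dyS -/h; lra.
  + split; first exact: tau_T; split=> // z _.
    have : (1 <= dy n j)%R.
      rewrite /dy; apply: (Rmult_le_reg_r (INR (expn 2 n))) => //.
      rewrite /Rdiv Rmult_assoc Rinv_l; last lra.
      rewrite Rmult_1_l Rmult_1_r; apply: le_INR; apply/leP; by rewrite leqNgt hj.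
    have := (u_01 z).2; lra.
have [U2 [hU2o [hU2y hU2z]]] := hU2.
have [hU1o [hU1y hU1z]] := hU1.
exists (fun z => U1 z /\ U2 z); split; first exact: tau_I.
split=> // z [z1 z2].
have := hU1z z z1; have := hU2z z z2; rewrite -/t => a b.
apply: Rabs_def1; lra.
Qed.

End Urysohn.

Theorem urysohn {T} {tau : topology T} (htop : is_topology tau) (hsh : shrink_prop tau)
  (F G : T -> Prop) : tau (fun x => ~ F x) -> tau G -> subs F G ->
  exists u : T -> R, (forall y, 0 <= u y <= 1)%R /\ (forall y, F y -> u y = 0%R) /\
    (forall y, ~ G y -> u y = 1%R) /\
    (forall y eps, (0 < eps)%R -> exists O, tau O /\ O y /\ forall z, O z -> (Rabs (u z - u y) < eps)%R).
Proof.
move=> hF hG hFG.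
exists (@u T tau F G); split; first exact: u_01.
split; first by move=> y; apply: (u_F0 hsh F G hF hG hFG).
split; first by move=> y; apply: (u_G1 hsh F G hF hG hFG).
exact: (u_cont hsh F G hF hG hFG htop).
Qed.

Section Metrize.
Context {T : Type} {tau : topology T} (htop : is_topology tau) (hcpt : cpt tau (fun _ => True)).
Context (uu : nat -> nat -> nat -> T -> R).
Context (hu01 : forall n a b y, (0 <= uu n a b y <= 1)%R).
Context (hucont : forall n a b y eps, (0 < eps)%R ->
   exists O, tau O /\ O y /\ forall z, O z -> (Rabs (uu n a b z - uu n a b y) < eps)%R).
Context (husep : forall p q, p <> q -> exists n a b, uu n a b p <> uu n a b q).

Lemma tau_I' A B : tau A -> tau B -> tau (fun x => A x /\ B x).
Proof. by case: htop => _ [h _]; apply: h. Qed.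
Lemma tau_T' : tau (fun _ => True).
Proof. by case: htop. Qed.

Definition w (n a b : nat) : R := (/ (2 ^ (n + a + b)))%R.

Lemma w_pos n a b : (0 < w n a b)%R.
Proof. apply: Rinv_0_lt_compat; apply: pow_lt; lra. Qed.
Lemma w_le1 n a b : (w n a b <= 1)%R.
Proof.
rewrite /w -Rinv_1; apply: Rinv_le_contravar; first lra.
apply: pow_R1_Rle; lra.
Qed.
Lemma w_le n a b N : N <= n + a + b -> (w n a b <= / 2 ^ N)%R.
Proof.
move=> hN; rewrite /w; apply: Rinv_le_contravar; first by apply: pow_lt; lra.
apply: Rle_pow; first lra; exact/leP.
Qed.

Definition term p q n a b := (w n a b * Rabs (uu n a b p - uu n a b q))%R.

Lemma term_ge0 p q n a b : (0 <= term p q n a b)%R.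
Proof. apply: Rmult_le_pos; [exact: Rlt_le (w_pos n a b) | exact: Rabs_pos]. Qed.

Lemma term_le1 p q n a b : (term p q n a b <= 1)%R.
Proof.
rewrite /term; have := w_le1 n a b; have := w_pos n a b.
have := hu01 n a b p; have := hu01 n a b q => h1 h2 h3 h4.
have : (Rabs (uu n a b p - uu n a b q) <= 1)%R by apply: Rabs_le; lra.
have := Rabs_pos (uu n a b p - uu n a b q); nra.
Qed.

Definition Rset p q r := exists n a b, r = term p q n a b.
Lemma Rset_bound p q : bound (Rset p q).
Proof. by exists 1%R => r [n [a [b ->]]]; apply: term_le1. Qed.
Lemma Rset_ne p q : exists r, Rset p q r.
Proof. by exists (term p q 0 0 0), 0, 0, 0. Qed.

Definition rho p q := proj1_sig (completeness (Rset p q) (Rset_bound p q) (Rset_ne p q)).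

Lemma rho_ge p q n a b : (term p q n a b <= rho p q)%R.
Proof. rewrite /rho; case: completeness => m [ub _] /=; apply: ub; by exists n, a, b. Qed.

Lemma rho_le p q c : (forall n a b, (term p q n a b <= c)%R) -> (rho p q <= c)%R.
Proof. rewrite /rho; case: completeness => m [_ lub] /= H; apply: lub => r [n [a [b ->]]]; exact: H. Qed.

Lemma rho_metric : is_metric rho.
Proof.
split; [|split; [|split]].
- move=> p q; apply: Rle_trans (rho_ge p q 0 0 0); exact: term_ge0.
- move=> p q; split.
  + move=> h0; apply: NNPP => npq.
    have [n [a [b ne]]] := husep _ _ npq.
    have := rho_ge p q n a b; rewrite h0 /term => h.
    have : (0 < Rabs (uu n a b p - uu n a b q))%R by apply: Rabs_pos_lt; move=> e; apply: ne; lra.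
    have := w_pos n a b; nra.
  + move=> ->; apply: Rle_antisym; last by apply: Rle_trans (rho_ge q q 0 0 0); exact: term_ge0.
    apply: rho_le => n a b; rewrite /term Rminus_diag Rabs_R0 Rmult_0_r; lra.
- move=> p q; apply: Rle_antisym; apply: rho_le => n a b.
  + by rewrite /term Rabs_minus_sym; apply: rho_ge.
  + by rewrite /term Rabs_minus_sym; apply: rho_ge.
- move=> p r q; apply: rho_le => n a b.
  apply: Rle_trans (Rplus_le_compat _ _ _ _ (rho_ge p r n a b) (rho_ge r q n a b)).
  rewrite /term -Rmult_plus_distr_l; apply: Rmult_le_compat_l; first exact: Rlt_le (w_pos n a b).
  have -> : (uu n a b p - uu n a b q = (uu n a b p - uu n a b r) + (uu n a b r - uu n a b q))%R by ring.
  exact: Rabs_triang.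
Qed.

Lemma fin_nbhd (q : T) (m : nat) (P : nat -> T -> Prop) :
  (forall k, k < m -> exists O, tau O /\ O q /\ forall z, O z -> P k z) ->
  exists O, tau O /\ O q /\ forall k, k < m -> forall z, O z -> P k z.
Proof.
elim: m => [|m IH] h.
  by exists (fun _ => True); split; [exact: tau_T' | split=> // k; rewrite ltn0].
have [O [oO [Oq HO]]] := IH (fun k km => h k (ltnW km)).
have [O' [oO' [O'q HO']]] := h m (ltnSn m).
exists (fun z => O z /\ O' z); split; first exact: tau_I'.
split=> // k; rewrite ltnS leq_eqVlt => /orP [/eqP ->|km] z [z1 z2].
- exact: HO'.
- exact: HO.
Qed.

Lemma rho_local q delta : (0 < delta)%R -> exists O, tau O /\ O q /\ forall z, O z -> (rho q z < delta)%R.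
Proof.
move=> d0.
have [N HN] := pow_lt_1_zero (/ 2) (ltac:(rewrite Rabs_right; lra)) (delta / 2) (ltac:(lra)).
have hN : (/ 2 ^ N < delta / 2)%R.
  have := HN N (le_n N); rewrite pow_inv Rabs_right //.
  apply: Rle_ge; apply: Rlt_le; apply: Rinv_0_lt_compat; apply: pow_lt; lra.
have [O [oO [Oq HO]]] : exists O, tau O /\ O q /\ forall n, n < N -> forall z, O z ->
    forall a, a < N -> forall b, b < N -> (Rabs (uu n a b z - uu n a b q) < delta / 2)%R.
  apply: fin_nbhd => n _.
  have [O [oO [Oq HO]]] : exists O, tau O /\ O q /\ forall a, a < N -> forall z, O z ->
      forall b, b < N -> (Rabs (uu n a b z - uu n a b q) < delta / 2)%R.
    apply: fin_nbhd => a _.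
    have [O [oO [Oq HO]]] : exists O, tau O /\ O q /\ forall b, b < N -> forall z, O z ->
        (Rabs (uu n a b z - uu n a b q) < delta / 2)%R.
      apply: fin_nbhd => b _; apply: hucont; lra.
    by exists O; split=> //; split=> // z Oz b bN; apply: HO.
  by exists O; split=> //; split=> // z Oz a aN b bN; apply: HO.
exists O; split=> //; split=> // z Oz.
apply: (Rle_lt_trans _ (delta / 2)); last lra.
apply: rho_le => n a b; rewrite /term Rabs_minus_sym.
have hw0 := w_pos n a b. have hw1 := w_le1 n a b.
have hab := Rabs_pos (uu n a b z - uu n a b q).
have hb1 : (Rabs (uu n a b z - uu n a b q) <= 1)%R.
  by apply: Rabs_le; have := hu01 n a b z; have := hu01 n a b q; lra.
case: (boolP [&& n < N, a < N & b < N]) => [/and3P [hn ha hb]|hnot].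
- have := HO n hn z Oz a ha b hb; nra.
- have hw : (w n a b <= / 2 ^ N)%R.
    apply: w_le; move: hnot; rewrite !negb_and -!leqNgt; lia.
  nra.
Qed.

Theorem metrize : metrizable tau.
Proof.
exists rho; split; first exact: rho_metric.
have hm := rho_metric.
move=> V; split.
- move=> hV p Vp.
  have hS : cpt tau (fun x => ~ V x).
    apply: (cpt_ext (cpt_closed (Cl := fun x => ~ V x) hcpt (open_nn _ _ hV))) => x; split=> [[]|] //.
  pose G W := exists r, ~ V r /\ tau W /\ W r /\ forall z, W z -> (rho r z < rho p r / 2)%R.
  have [|r nVr|n [f [hf hfc]]] := hS G.
  + by move=> W [r [_ [h _]]].
  + have pr : (0 < rho p r)%R.
      have := mdge0 hm p r; case/Rle_lt_or_eq_dec => // /esym /(mdeq hm) e.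
      by rewrite e in Vp.
    have [O [oO [Or HO]]] := rho_local r (rho p r / 2) (ltac:(lra)).
    by exists O; split=> //; exists r.
  + pose P k (dd : R) := forall z, f k z -> (dd <= rho p z)%R.
    have [|k kn|dd [d0 Hd]] := fin_pos n P.
    * by move=> k r r' _ le h z fz; have := h z fz; lra.
    * have [r [nVr [_ [_ Hr]]]] := hf k kn.
      have pr : (0 < rho p r)%R.
        have := mdge0 hm p r; case/Rle_lt_or_eq_dec => // /esym /(mdeq hm) e.
        by rewrite e in Vp.
      exists (rho p r / 2)%R; split; first lra.
      move=> z fz; have := Hr z fz; have := mdtri hm p z r; have := mdsym hm z r; lra.
    * exists dd; split=> // z dz; apply: NNPP => nVz.
      have [k [kn fz]] := hfc z nVz.
      have := Hd k kn z fz; lra.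
- move=> hV.
  have -> : V = (fun x => exists A, (tau A /\ subs A V) /\ A x).
    apply: set_ext => x; split.
    + move=> Vx; have [e [e0 He]] := hV x Vx.
      have [O [oO [Ox HO]]] := rho_local x e e0.
      exists O; split=> //; split=> // z Oz; apply: He; exact: HO.
    + by move=> [A [[_ sA] Ax]]; apply: sA.
  by case: htop => _ [_ hU]; apply: hU => A [].
Qed.

End Metrize.

Lemma mopen_top {T} (d : T -> T -> R) : is_topology (mopen d).
Proof.
split; [|split].
- by move=> x _; exists 1%R; split=> //; lra.
- move=> A B hA hB x [Ax Bx].
  have [e1 [e10 H1]] := hA x Ax; have [e2 [e20 H2]] := hB x Bx.
  exists (Rmin e1 e2); split; first by apply: Rmin_glb_lt.
  move=> y hy; split; [apply: H1 | apply: H2]; [have := Rmin_l e1 e2 | have := Rmin_r e1 e2]; lra.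
- move=> F hF x [A [FA Ax]].
  have [e [e0 He]] := hF A FA x Ax.
  by exists e; split=> // y hy; exists A; split=> //; apply: He.
Qed.

Lemma quot_top {T} {op : topology T} (Rl : T -> T -> Prop) :
  is_topology op -> is_topology (quotient_top op Rl).
Proof.
case=> h1 [h2 h3]; split; [|split].
- exact: h1.
- move=> A B; exact: h2.
- move=> F hF; rewrite /quotient_top.
  have e : (fun a => exists A, F A /\ A (qproj Rl a)) =
           (fun x => exists B, (exists A, F A /\ B = (fun a => A (qproj Rl a))) /\ B x).
    apply: set_ext => a; split.
    + by move=> [A [FA hA]]; exists (fun a => A (qproj Rl a)); split=> //; exists A.
    + by move=> [B [[A [FA ->]] hB]]; exists A.
  rewrite e; apply: h3 => B [A [FA ->]]; exact: hF.
Qed.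

Lemma sub_top {T} {op : topology T} (S : T -> Prop) :
  is_topology op -> is_topology (subspace op S).
Proof.
case=> h1 [h2 h3]; split; [|split].
- by exists (fun _ => True).
- move=> A B [W1 [o1 H1]] [W2 [o2 H2]]; exists (fun x => W1 x /\ W2 x); split; first exact: h2.
  by move=> y; rewrite H1 H2.
- move=> F hF.
  exists (fun x => exists W, (op W /\ exists A, F A /\ forall y, A y <-> W (proj1_sig y)) /\ W x).
  split; first by apply: h3 => W [].
  move=> y; split.
  + move=> [A [FA Ay]]; have [W [oW HW]] := hF A FA.
    by exists W; split; [split=> //; exists A | exact/(HW y)].
  + by move=> [W [[oW [A [FA HA]]] Wy]]; exists A; split=> //; apply/HA.
Qed.

Section Inst.
Context {X : Type} {opX : topology X} {K : atlas X}.
Context (hK : tame_top_atlas opX K).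
Context (hXmet : metrizable opX).

Lemma topObj_top : is_topology (topObj K).
Proof. rewrite (top_ext _ _ (dO_top hK)); exact: mopen_top. Qed.

Lemma normtop_top (C : Obj K -> Prop) : is_topology (normtop C).
Proof. apply: sub_top; apply: quot_top; exact: topObj_top. Qed.

Lemma cball_closed (c : Obj K) r : topObj K (fun x => ~ (dO c x <= r)%R).
Proof.
apply/(dO_top hK) => x hx; have hm := dO_metric hK.
exists (dO c x - r)%R; split; first lra.
move=> y hy hle; have := mdtri hm c y x; have := mdsym hm x y; lra.
Qed.

Lemma ballObj (c : Obj K) r : topObj K (fun x => (dO c x < r)%R).
Proof. apply/(dO_top hK); exact: ball_open (dO_metric hK) _ _. Qed.

Section WithC.
Context (C : Obj K -> Prop) (hc : cpt (topObj K) C).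
Context (a0 : Obj K) (Ca0 : C a0).

Local Notation Y := {p : virt K | piset C p}.
Local Notation tau := (normtop C).

Lemma tau_cpt : cpt tau (fun _ => True).
Proof.
apply/cpt_whole; rewrite -(top_ext _ _ (bar_norm hK hXmet hc)).
exact: (bar_cpt hc).
Qed.

Lemma tau_open_of S : cpt (topObj K) S -> tau (fun y : Y => ~ piset S (proj1_sig y)).
Proof. move=> hS; exists (fun p => ~ piset S p); split=> //; exact: (KC_closed hK hXmet _ hS). Qed.

Lemma tau_shrink : shrink_prop tau.
Proof.
move=> F G hF hG hFG.
have [V0 [oV0 HV0]] := (bar_norm hK hXmet hc _).2 hF.
have [V1 [oV1 HV1]] := (bar_norm hK hXmet hc _).2 hG.
have hm := dO_metric hK.
pose Fo a := C a /\ ~ V0 a.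
have hFo : cpt (topObj K) Fo := cpt_closed hc (open_nn _ _ oV0).
have FoV1 a : Fo a -> V1 a.
  move=> [Ca nV0]; apply/(HV1 (exist _ a Ca)); apply: hFG.
  apply: NNPP => nF; apply: nV0; exact/(HV0 (exist _ a Ca)).
pose Gd (ar : Obj K * R) W := Fo ar.1 /\ (0 < ar.2)%R /\
   (forall x, (dO ar.1 x < 2 * ar.2)%R -> V1 x) /\ W = (fun x => (dO ar.1 x < ar.2)%R).
pose G' W := exists ar, Gd ar W.
have [|a Foa|n [f [hf hfc]]] := hFo G'.
- by move=> W [ar [_ [_ [_ ->]]]]; apply: ballObj.
- have [e [e0 He]] := (dO_top hK _).1 oV1 a (FoV1 a Foa).
  exists (fun x => (dO a x < e / 2)%R); split; last by rewrite /= (md0 hm); lra.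
  exists (a, e / 2)%R; split=> //; split=> /=; first lra; split=> // x hx; apply: He; lra.
pose ck k := epsilon (inhabits (a0, 1%R)) (fun ar => Gd ar (f k)).
have hck k : k < n -> Gd (ck k) (f k).
  move=> kn; have [ar har] := hf k kn.
  by apply: (epsilon_spec (inhabits (a0, 1%R)) (fun ar => Gd ar (f k))); exists ar.
pose N x := exists k, k < n /\ f k x.
pose Ncl x := exists k, k < n /\ (dO (ck k).1 x <= (ck k).2)%R.
have oN : topObj K N.
  apply/(dO_top hK) => x [k [kn fx]].
  have [_ [_ [_ e]]] := hck k kn; rewrite e /= in fx.
  exists ((ck k).2 - dO (ck k).1 x)%R; split; first lra.
  move=> y hy; exists k; split=> //; rewrite e /=.
  have := mdtri hm (ck k).1 x y; lra.
have oNcl : topObj K (fun x => ~ Ncl x).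
  apply/(dO_top hK) => x nx.
  have hx k : k < n -> ((ck k).2 < dO (ck k).1 x)%R.
    by move=> kn; apply: Rnot_le_lt => h; apply: nx; exists k.
  have [|k kn|ep [ep0 Hep]] := fin_pos n (fun k ep => forall y, (dO x y < ep)%R -> ~ (dO (ck k).1 y <= (ck k).2)%R).
  + by move=> k r r' _ le h y hy; apply: h; lra.
  + exists (dO (ck k).1 x - (ck k).2)%R; split; first by have := hx k kn; lra.
    move=> y hy hle; have := mdtri hm (ck k).1 y x; have := mdsym hm x y; lra.
  + exists ep; split=> // y hy [k [kn hk]]; exact: (Hep k kn y hy hk).
have NNcl x : N x -> Ncl x.
  move=> [k [kn fx]]; exists k; split=> //.
  have [_ [_ [_ e]]] := hck k kn; rewrite e /= in fx; lra.
have NclV1 x : Ncl x -> V1 x.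
  move=> [k [kn hk]]; have [_ [r0 [hV _]]] := hck k kn; apply: hV; lra.
have FoN x : Fo x -> N x by move=> hx; have [k [kn fk]] := hfc x hx; exists k.
pose S1 a := C a /\ ~ N a.
pose S2 a := C a /\ Ncl a.
have cS1 : cpt (topObj K) S1 := cpt_closed hc (open_nn _ _ oN).
have cS2 : cpt (topObj K) S2 := cpt_closed hc oNcl.
exists (fun y : Y => ~ piset S1 (proj1_sig y)), (fun y : Y => piset S2 (proj1_sig y)).
split; first exact: tau_open_of.
split; first exact: tau_open_of.
split; [|split].
- move=> y Fy [a [[Ca nNa] ea]]; apply: nNa; apply: FoN; split=> //.
  move=> V0a; have : ~ F (piA C (exist _ a Ca)) by apply/(HV0 (exist _ a Ca)).
  apply; have -> : piA C (exist _ a Ca) = y by apply: sig_eq.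
  done.
- move=> [p [a [Ca ea]]] /= nS1.
  exists a; split=> //; split=> //; apply: NNcl; apply: NNPP => nN; apply: nS1.
  by exists a.
- move=> [p [a [Ca ea]]] /= [b [[Cb Nclb] eb]].
  have -> : exist (fun p => piset C p) p (ex_intro _ a (conj Ca ea)) = piA C (exist _ b Cb) by apply: sig_eq.
  apply/(HV1 (exist _ b Cb)); exact: NclV1.
Qed.

Lemma net_ex r : (0 < r)%R -> exists mz : nat * (nat -> Obj K),
  (forall k, k < mz.1 -> C (mz.2 k)) /\ forall c, C c -> exists k, k < mz.1 /\ (dO (mz.2 k) c < r)%R.
Proof.
move=> r0; have hm := dO_metric hK.
pose Gb W := exists c, C c /\ W = (fun x => (dO c x < r)%R).
have [|c Cc|m [f [hf hfc]]] := hc Gb.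
- by move=> W [c [_ ->]]; apply: ballObj.
- by exists (fun x => (dO c x < r)%R); split; [exists c | rewrite /= (md0 hm)].
pose z k := epsilon (inhabits a0) (fun c => C c /\ f k = (fun x => (dO c x < r)%R)).
have hz k : k < m -> C (z k) /\ f k = (fun x => (dO (z k) x < r)%R).
  move=> km; have [c hc'] := hf k km.
  by apply: (epsilon_spec (inhabits a0) (fun c => C c /\ f k = (fun x => (dO c x < r)%R))); exists c.
exists (m, z); split=> /=; first by move=> k /hz [].
move=> c Cc; have [k [km fk]] := hfc c Cc.
by exists k; split=> //; have [_ e] := hz k km; rewrite e in fk.
Qed.

Definition netp (n : nat) := proj1_sig (constructive_indefinite_description _ (net_ex _ (inv_pos n))).
Lemma netp_spec n : (forall k, k < (netp n).1 -> C ((netp n).2 k)) /\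
  forall c, C c -> exists k, k < (netp n).1 /\ (dO ((netp n).2 k) c < / INR n.+1)%R.
Proof. exact: (proj2_sig (constructive_indefinite_description _ (net_ex _ (inv_pos n)))). Qed.

Definition Kb n a x := C x /\ (dO ((netp n).2 a) x <= / INR n.+1)%R.
Lemma Kb_cpt n a : cpt (topObj K) (Kb n a).
Proof. exact: (cpt_closed hc (cball_closed _ _)). Qed.

Definition Fs (n a b : nat) (y : Y) := piset (Kb n a) (proj1_sig y).
Definition Gs (n a b : nat) (y : Y) := ~ piset (Kb n b) (proj1_sig y).

Definition ury_cond (F G : Y -> Prop) := subs F G /\ tau (fun y => ~ F y) /\ tau G.

Definition ury (F G : Y -> Prop) : Y -> R :=
  match excluded_middle_informative (ury_cond F G) with
  | left h => proj1_sig (constructive_indefinite_description _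
        (urysohn (normtop_top C) tau_shrink F G h.2.1 h.2.2 h.1))
  | right _ => fun _ => 0%R
  end.

Lemma ury_spec F G : (forall y, 0 <= ury F G y <= 1)%R /\
  (forall y eps, (0 < eps)%R -> exists O, tau O /\ O y /\ forall z, O z -> (Rabs (ury F G z - ury F G y) < eps)%R) /\
  (ury_cond F G -> (forall y, F y -> ury F G y = 0%R) /\ (forall y, ~ G y -> ury F G y = 1%R)).
Proof.
rewrite /ury; case: excluded_middle_informative => h.
- case: constructive_indefinite_description => u [h1 [h2 [h3 h4]]] /=.
  by split=> //; split.
- split; first by move=> y; lra.
  split; last by [].
  move=> y eps e0; exists (fun _ => True); split; first by case: (normtop_top C).
  by split=> // z _; rewrite Rminus_diag Rabs_R0.
Qed.

Definition uu n a b := ury (Fs n a b) (Gs n a b).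

Lemma uu_sep p q : p <> q -> exists n a b, uu n a b p <> uu n a b q.
Proof.
move=> npq; have hm := dO_metric hK.
case: (p) (q) npq => [pp [cp [Cp ep]]] [qq [cq [Cq eq]]] npq.
have ns : ~ simK K cp cq.
  move=> s; apply: npq; apply: sig_eq => /=; rewrite -ep -eq; exact/(piK_eq).
have [r [r0 Hr]] := loc_sep hK hXmet _ _ ns.
have [N [hN N0]] := archimed_cor1 (r / 2) (ltac:(lra)).
have hn : (/ INR N.+1 < r / 2)%R.
  apply: Rle_lt_trans hN; apply: Rinv_le_contravar; first by apply: lt_0_INR.
  apply: le_INR; apply/leP; exact: leqnSn.
have [_ hnet] := netp_spec N.
have [a [am da]] := hnet cp Cp.
have [b [bm db]] := hnet cq Cq.
have cond : ury_cond (Fs N a b) (Gs N a b).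
  split; [|split].
  - move=> y [a' [[Ca' da'] ea']] [b' [[Cb' db'] eb']].
    have s : simK K a' b' by apply/piK_eq; rewrite ea' eb'.
    apply: (Hr a' b') => //.
    + have := mdtri hm cp ((netp N).2 a) a'; have := mdsym hm cp ((netp N).2 a); lra.
    + have := mdtri hm cq ((netp N).2 b) b'; have := mdsym hm cq ((netp N).2 b); lra.
  - exists (fun p => ~ piset (Kb N a) p); split; first exact: (KC_closed hK hXmet _ (Kb_cpt N a)).
    by move=> y; rewrite /Fs; split=> h; [exact: h | exact: h].
  - exact: (tau_open_of _ (Kb_cpt N b)).
have [_ [_ H]] := ury_spec (Fs N a b) (Gs N a b).
have [H0 H1] := H cond.
exists N, a, b; rewrite /uu.
set pp' := exist _ pp _; set qq' := exist _ qq _.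
rewrite (H0 pp'); last by exists cp; split=> //; split=> //; lra.
rewrite (H1 qq'); first lra.
by move=> nG; apply: nG; exists cq; split=> //; split=> //; lra.
Qed.

Theorem tau_metrizable : metrizable tau.
Proof.
apply: (metrize (normtop_top C) tau_cpt uu).
- move=> n a b y; exact: ((ury_spec _ _).1 y).
- move=> n a b y eps e0; exact: ((ury_spec _ _).2.1 y eps e0).
- exact: uu_sep.
Qed.

End WithC.
End Inst.

Lemma metr_empty {T} (op : topology T) : (T -> False) -> op (fun _ => True) -> metrizable op.
Proof.
move=> hT hop; exists (fun _ _ => 0%R); split.
- split; [|split; [|split]]=> x; case: (hT x).
- move=> V; have -> : V = (fun _ => True) by apply: set_ext => x; case: (hT x).
  by split=> // _ x; case: (hT x).
Qed.

Section Fin.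
Context {X : Type} {opX : topology X} {K : atlas X}.
Context (hK : tame_top_atlas opX K).
Context (hXmet : metrizable opX).

Lemma topVirt_T : topVirt K (fun _ => True).
Proof. by case: (topObj_top hK). Qed.

Lemma metr_sub (A C : Obj K -> Prop) (AC : forall a, A a -> C a) :
  metrizable (normtop C) -> metrizable (normtop A).
Proof.
move=> [d [hd hop]].
pose iota (x : {p | piset A p}) : {p | piset C p} :=
  exist _ (proj1_sig x) (let: ex_intro a (conj Aa e) := proj2_sig x in ex_intro _ a (conj (AC a Aa) e)).
have pi x : proj1_sig (iota x) = proj1_sig x by [].
exists (fun x y => d (iota x) (iota y)); split.
- split; [|split; [|split]].
  + move=> x y; exact: (mdge0 hd (iota x) (iota y)).
  + move=> x y; split.
    * move/(mdeq hd) => e; apply: sig_eq; rewrite -pi e.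
      done.
    * by move=> ->; rewrite (md0 hd).
  + move=> x y; exact: (mdsym hd (iota x) (iota y)).
  + move=> x y z; exact: (mdtri hd (iota x) (iota y) (iota z)).
- move=> V; split.
  + move=> [W0 [oW0 HW0]] x Vx.
    have oU : normtop C (fun y => W0 (proj1_sig y)) by exists W0.
    have [e [e0 He]] := (hop _).1 oU (iota x) ((HW0 x).1 Vx).
    exists e; split=> // x' hx'; apply/(HW0 x'); exact: (He _ hx').
  + move=> hV.
    pose U y := exists x, V x /\ exists e, (0 < e)%R /\
       (forall x', (d (iota x) (iota x') < e)%R -> V x') /\ (d (iota x) y < e)%R.
    have oU : normtop C U.
      apply/hop => y [x [Vx [e [e0 [He dy]]]]].
      exists (e - d (iota x) y)%R; split; first lra.
      move=> y' hy'; exists x; split=> //; exists e; split=> //; split=> //.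
      have := mdtri hd (iota x) y y'; lra.
    have [W0 [oW0 HW0]] := oU.
    exists W0; split=> // x; split.
    * move=> Vx; rewrite -pi; apply/(HW0 (iota x)).
      have [e [e0 He]] := hV x Vx.
      by exists x; split=> //; exists e; split=> //; split=> //; rewrite (md0 hd).
    * rewrite -pi => /(HW0 (iota x)) [x0 [Vx0 [e [e0 [He dx]]]]].
      exact: He.
Qed.

Lemma part_iv A : relcomp (topObj K) A ->
     metrizable (normtop (tclosure (topObj K) A)) /\
     metrizable (bartop (tclosure (topObj K) A)) /\
     metrizable (normtop A).
Proof.
move=> /cpt_sub hc.
set C := tclosure (topObj K) A in hc *.
have AC a : A a -> C a by move=> Aa Cl _ h; apply: h.
case: (classic (exists c0, C c0)) => [[c0 Cc0]|nC].
- have m1 := tau_metrizable hK hXmet _ hc c0.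
  split=> //; split; last exact: (metr_sub _ _ AC m1).
  by rewrite (top_ext _ _ (bar_norm hK hXmet hc)).
- have eC : forall (S : Obj K -> Prop), (forall a, S a -> C a) -> {p | piset S p} -> False.
    by move=> S SC [p [a [Sa _]]]; apply: nC; exists a; apply: SC.
  split; [|split].
  + apply: metr_empty; first exact: eC.
    by exists (fun _ => True); split=> //; exact: topVirt_T.
  + apply: metr_empty; first exact: eC.
    by exists (fun _ => True); split=> //; exact: (topObj_top hK).1.
  + apply: metr_empty; first exact: (eC A AC).
    by exists (fun _ => True); split=> //; exact: topVirt_T.
Qed.

End Fin.

Theorem mainTheorem8 (X : Type) (opX : topology X)
  (hXtop : is_topology opX) (hXcomp : compact_space opX) (hXmet : metrizable opX)
  (K : atlas X) (hK : tame_top_atlas opX K) :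
  (* (i) *)
  (forall A : Obj K -> Prop, forall W, normtop A W -> bartop A W) /\
  (* (ii) *)
  (forall A : Obj K -> Prop, relcomp (topObj K) A ->
     compact_space (bartop (tclosure (topObj K) A)) /\
     compact_space (normtop (tclosure (topObj K) A)) /\
     (forall W, bartop (tclosure (topObj K) A) W <->
                normtop (tclosure (topObj K) A) W)) /\
  (* (iii) *)
  (forall A A' : Obj K -> Prop, (forall a, A a -> A' a) ->
     relcomp_in (topObj K) A A' ->
     (forall p, piset (tclosure (topObj K) A) p <-> tclosure (topVirt K) (piset A) p) /\
     relcomp_in (topVirt K) (piset A) (piset A')) /\
  (* (iv) *)
  (forall A : Obj K -> Prop, relcomp (topObj K) A ->
     metrizable (normtop (tclosure (topObj K) A)) /\
     metrizable (bartop (tclosure (topObj K) A)) /\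
     metrizable (normtop A)).
Proof.
split; first exact: part_i.
split; first by move=> A; apply: (part_ii hK hXmet).
split; first by move=> A A'; apply: (part_iii hK hXmet).
by move=> A; apply: (part_iv hK hXmet).
Qed.
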